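(* Let $0<k<1$, $\gamma>0$, $\delta>1$, and $Z=\{(\tau,s)\in\mathcal C:g(\tau,s)=0\}$. (W) If $1<\delta<\Phi$ and $\gamma>\gamma_-(\delta)$, then $Z=\emptyset$. (X) If $1<\delta<\Phi$ and $\gamma_+(\delta)<\gamma<\gamma_-(\delta)$, then there are $0<\tau_1<\tau_2<1$ such that $Z\cap(\{\tau\}\times S^1)$ has exactly two points for $\tau\in(\tau_1,\tau_2)$, is the single point $(\tau,3\pi/2)$ for $\tau\in\{\tau_1,\tau_2\}$, and is empty otherwise; $(\tau_1,3\pi/2)$ is a supercritical and $(\tau_2,3\pi/2)$ a subcritical fold point; $Z$ is a simple closed curve that is contractible in $\mathcal C$. (Y) If $1<\delta<\Phi$ and $0<\gamma<\gamma_+(\delta)$, then there are $0<a_1<a_2<a_3<a_4<1$ such that $Z\cap(\{\tau\}\times S^1)$ has exactly two points for $\tau\in(a_1,a_2)\cup(a_3,a_4)$, is the single point $(a_1,3\pi/2)$, $(a_2,\pi/2)$, $(a_3,\pi/2)$, $(a_4,3\pi/2)$ for $\tau=a_1,a_2,a_3,a_4$ respectively, and is empty otherwise; these four points are fold points, supercritical at $a_1,a_3$ and subcritical at $a_2,a_4$; $Z$ is the union of two disjoint simple closed curves, each non-contractible in $\mathcal C$. (Z) If $\delta>\Phi$, then there are $0<b_1<b_2<1$ such that $Z\cap(\{\tau\}\times S^1)$ has exactly two points for $\tau\in(b_1,b_2)$, is the single point $(b_1,\pi/2)$, resp. $(b_2,3\pi/2)$, for $\tau=b_1$, resp. $b_2$,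 and is empty otherwise; $(b_1,\pi/2)$ is a supercritical and $(b_2,3\pi/2)$ a subcritical fold point; $Z$ is a simple closed curve non-contractible in $\mathcal C$.
   Context: Let $S^1=\mathbb R/2\pi\mathbb Z$ and $\mathcal C=\{(\tau,s):0<\tau\le1,\ s\in S^1\}$. Let $p(\delta)=-\delta^2+\delta+1$, $\Phi=(1+\sqrt5)/2$. For parameters $\delta>1$, $\gamma>0$, $k>0$ define $g:\mathcal C\to\mathbb R$, $g(\tau,s)=\tau^{\delta^2}+\gamma\tau^{\delta^2-\delta}(1+k\sin s)-\tau$; thus $g(\tau,s)=0$ iff $\gamma(1+k\sin s)=\mathcal F_\delta(\tau)$, where $\mathcal F_\delta(\tau)=\tau^{p(\delta)}-\tau^\delta$. For $1<\delta<\Phi$, $M_{\mathcal F}(\delta)=\max_{(0,1]}\mathcal F_\delta>0$, $\gamma_+(\delta)=M_{\mathcal F}(\delta)/(1+k)$ and (for $k<1$) $\gamma_-(\delta)=M_{\mathcal F}(\delta)/(1-k)$. A fold point is a point $(\tau_0,s_0)\in\mathcal C$ with $g(\tau_0,s_0)=0$ and $\partial g/\partial s(\tau_0,s_0)=0$. It is supercritical if there is a neighbourhood $U$ of $(\tau_0,s_0)$ such that for $\tau>\tau_0$ close to $\tau_0$ the set $\{s:(\tau,s)\in U,\ g(\tau,s)=0\}$ has exactly two elements, for $\tau=\tau_0$ exactly one, and for $\tau<\tau_0$ close to $\tau_0$ none; subcritical if the same holds with the roles of $\tau>\tau_0$ and $\tau<\tau_0$ interchanged. *)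

(* Defs.v *)
From Stdlib Require Import Reals Lra.
Open Scope R_scope.

Definition pdelta (d : R) : R := - d ^ 2 + d + 1.
Definition Phi : R := (1 + sqrt 5) / 2.

Definition gfun (d gam k tau s : R) : R :=
  Rpower tau (d ^ 2) + gam * Rpower tau (d ^ 2 - d) * (1 + k * sin s) - tau.

Definition Ffun (d tau : R) : R := Rpower tau (pdelta d) - Rpower tau d.

Definition is_max_F (d M : R) : Prop :=
  (exists tau, 0 < tau <= 1 /\ Ffun d tau = M) /\
  (forall tau, 0 < tau <= 1 -> Ffun d tau <= M).

(* The cylinder C = (0,1] x S^1 is realized inside R^3 via the embedding
   (tau, s) |-> (tau, cos s, sin s); this identifies S^1 = R/2piZ with the
   unit circle and gives C its (subspace) topology. *)
Definition Rpt : Type := (R * R * R)%type.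
Definition emb (tau s : R) : Rpt := (tau, cos s, sin s).
Definition tcoord (p : Rpt) : R := fst (fst p).

Definition inC (p : Rpt) : Prop := exists tau s, 0 < tau <= 1 /\ p = emb tau s.

Definition Zset (d gam k : R) (p : Rpt) : Prop :=
  exists tau s, 0 < tau <= 1 /\ gfun d gam k tau s = 0 /\ p = emb tau s.

Definition slice (A : Rpt -> Prop) (tau : R) (p : Rpt) : Prop := A p /\ tcoord p = tau.

Definition is_empty (A : Rpt -> Prop) : Prop := forall p, ~ A p.
Definition is_singleton (A : Rpt -> Prop) (q : Rpt) : Prop := forall p, A p <-> p = q.
Definition has_exactly_one (A : Rpt -> Prop) : Prop := exists q, is_singleton A q.
Definition has_exactly_two (A : Rpt -> Prop) : Prop :=
  exists q1 q2, q1 <> q2 /\ forall p, A p <-> (p = q1 \/ p = q2).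

Definition dist3 (p q : Rpt) : R :=
  Rmax (Rabs (fst (fst p) - fst (fst q)))
       (Rmax (Rabs (snd (fst p) - snd (fst q))) (Rabs (snd p - snd q))).
Definition open3 (U : Rpt -> Prop) : Prop :=
  forall p, U p -> exists e, 0 < e /\ forall q, dist3 p q < e -> U q.

Definition fold_point (d gam k tau0 s0 : R) : Prop :=
  0 < tau0 <= 1 /\ gfun d gam k tau0 s0 = 0 /\
  derivable_pt_lim (fun s => gfun d gam k tau0 s) s0 0.

(* Neighbourhoods of a point of C are traces on C of open sets of R^3; the
   set {s : (tau,s) in U, g(tau,s)=0} corresponds to slice (U /\ Z) tau. *)
Definition supercritical (d gam k tau0 s0 : R) : Prop :=
  fold_point d gam k tau0 s0 /\
  exists U, open3 U /\ U (emb tau0 s0) /\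
  exists e, 0 < e /\
    (forall tau, tau0 < tau < tau0 + e ->
       has_exactly_two (slice (fun p => U p /\ Zset d gam k p) tau)) /\
    has_exactly_one (slice (fun p => U p /\ Zset d gam k p) tau0) /\
    (forall tau, tau0 - e < tau < tau0 ->
       is_empty (slice (fun p => U p /\ Zset d gam k p) tau)).

Definition subcritical (d gam k tau0 s0 : R) : Prop :=
  fold_point d gam k tau0 s0 /\
  exists U, open3 U /\ U (emb tau0 s0) /\
  exists e, 0 < e /\
    (forall tau, tau0 - e < tau < tau0 ->
       has_exactly_two (slice (fun p => U p /\ Zset d gam k p) tau)) /\
    has_exactly_one (slice (fun p => U p /\ Zset d gam k p) tau0) /\
    (forall tau, tau0 < tau < tau0 + e ->
       is_empty (slice (fun p => U p /\ Zset d gam k p) tau)).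

Definition cont01 (c : R -> Rpt) : Prop :=
  forall t, 0 <= t <= 1 -> forall e, 0 < e -> exists dl, 0 < dl /\
    forall u, 0 <= u <= 1 -> Rabs (u - t) < dl -> dist3 (c u) (c t) < e.

Definition simple_closed_param (c : R -> Rpt) (A : Rpt -> Prop) : Prop :=
  cont01 c /\ c 0 = c 1 /\
  (forall t u, 0 <= t <= 1 -> 0 <= u <= 1 -> c t = c u ->
     t = u \/ (t = 0 /\ u = 1) \/ (t = 1 /\ u = 0)) /\
  (forall p, A p <-> exists t, 0 <= t <= 1 /\ p = c t).

Definition contractible_in_C (c : R -> Rpt) : Prop :=
  exists H : R -> R -> Rpt,
    (forall t u, 0 <= t <= 1 -> 0 <= u <= 1 -> forall e, 0 < e ->
       exists dl, 0 < dl /\ forall t' u', 0 <= t' <= 1 -> 0 <= u' <= 1 ->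
         Rabs (t' - t) < dl -> Rabs (u' - u) < dl -> dist3 (H t' u') (H t u) < e) /\
    (forall t u, 0 <= t <= 1 -> 0 <= u <= 1 -> inC (H t u)) /\
    (forall t, 0 <= t <= 1 -> H t 0 = c t) /\
    (exists q, forall t, 0 <= t <= 1 -> H t 1 = q) /\
    (forall u, 0 <= u <= 1 -> H 0 u = H 1 u).

(* Main.v *)
Require Import Defs.
From Stdlib Require Import Reals Lra Lia Psatz Classical ClassicalEpsilon FunctionalExtensionality ZArith.
Open Scope R_scope.

Lemma sq_unit_bound (y z : R) : y^2 + z^2 = 1 -> -1 <= y <= 1.
Proof. intros H. split; nra. Qed.

Lemma circ_param (y z : R) : y^2 + z^2 = 1 ->
  exists s, 0 <= s < 2*PI /\ y = cos s /\ z = sin s.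
Proof.
  intros H. pose proof (sq_unit_bound y z H) as Hy.
  pose proof (acos_bound y) as Ha. pose proof (cos_acos y Hy) as Hc.
  pose proof (sin_acos y Hy) as Hs. pose proof PI_RGT_0.
  assert (Hz : z^2 = (sqrt (1 - y²))^2).
  { assert (0 <= 1 - y²) by (unfold Rsqr; nra).
    pose proof (sqrt_sqrt _ H1). unfold Rsqr in *. nra. }
  assert (Hsq : 0 <= sqrt (1 - y²)) by apply sqrt_pos.
  destruct (Rle_dec 0 z) as [Hz0|Hz0].
  - exists (acos y). split; [lra|]. split; [lra|].
    rewrite Hs. nra.
  - exists (2*PI - acos y).
    assert (Hne : acos y <> 0).
    { intro E. rewrite E, sin_0 in Hs. rewrite <- Hs in Hz. nra. }
    split; [lra|]. split.
    + rewrite cos_minus, cos_2PI, sin_2PI. lra.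
    + rewrite sin_minus, cos_2PI, sin_2PI, Hs. nra.
Qed.

Lemma cos_sin_eq_diff (a b : R) : cos a = cos b -> sin a = sin b ->
  sin (a - b) = 0 /\ cos (a - b) = 1.
Proof.
  intros Hc Hs. rewrite sin_minus, cos_minus, Hc, Hs.
  split; [ring|]. pose proof (sin2_cos2 b). unfold Rsqr in *. lra.
Qed.

Lemma angle_eq_small (a b : R) : cos a = cos b -> sin a = sin b ->
  Rabs (a - b) < 2*PI -> a = b.
Proof.
  intros Hc Hs Hab. destruct (cos_sin_eq_diff a b Hc Hs) as [H1 H2].
  destruct (sin_eq_0_0 _ H1) as [k Hk]. pose proof PI_RGT_0.
  assert (Hk2 : (-2 < k < 2)%Z).
  { split; apply lt_IZR; apply Rabs_def2 in Hab; destruct Hab; nra. }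
  assert (k = 0 \/ k = 1 \/ k = -1)%Z as [E|[E|E]] by lia; subst k.
  - simpl in Hk. lra.
  - simpl in Hk. rewrite Hk, Rmult_1_l, cos_PI in H2. lra.
  - simpl in Hk. rewrite Hk in H2. replace (-1 * PI) with (-PI) in H2 by ring.
    rewrite cos_neg, cos_PI in H2. lra.
Qed.

Lemma angle_eq_02pi (a b : R) : cos a = cos b -> sin a = sin b ->
  0 <= a <= 2*PI -> 0 <= b <= 2*PI -> a = b \/ (a = 0 /\ b = 2*PI) \/ (a = 2*PI /\ b = 0).
Proof.
  intros Hc Hs Ha Hb. destruct (cos_sin_eq_diff a b Hc Hs) as [H1 H2].
  destruct (sin_eq_0_0 _ H1) as [k Hk]. pose proof PI_RGT_0.
  assert (Hk2 : (-2 <= k <= 2)%Z).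
  { split; apply le_IZR; nra. }
  assert (k = 0 \/ k = 1 \/ k = -1 \/ k = 2 \/ k = -2)%Z as [E|[E|[E|[E|E]]]] by lia; subst k.
  - simpl in Hk. left; lra.
  - simpl in Hk. rewrite Hk, Rmult_1_l, cos_PI in H2. lra.
  - simpl in Hk. rewrite Hk in H2. replace (-1 * PI) with (-PI) in H2 by ring.
    rewrite cos_neg, cos_PI in H2. lra.
  - simpl in Hk. right; right. lra.
  - simpl in Hk. right; left. lra.
Qed.

Definition Yc (p : Rpt) : R := snd (fst p).
Definition Zc (p : Rpt) : R := snd p.
Definition unitp (p : Rpt) : Prop := Yc p ^ 2 + Zc p ^ 2 = 1.
Definition dotp (p q : Rpt) : R := Yc p * Yc q + Zc p * Zc q.
Definition crossp (p q : Rpt) : R := Yc p * Zc q - Zc p * Yc q.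
Definition Ang (p q : Rpt) : R := atan (crossp p q / dotp p q).
Definition rotated (p q : Rpt) (a : R) : Prop :=
  Yc q = cos a * Yc p - sin a * Zc p /\ Zc q = sin a * Yc p + cos a * Zc p.
Definition close (p q : Rpt) : Prop := dist3 p q < 1/10.

Lemma dist3_bounds p q : Rabs (Yc p - Yc q) <= dist3 p q /\ Rabs (Zc p - Zc q) <= dist3 p q
  /\ Rabs (fst (fst p) - fst (fst q)) <= dist3 p q.
Proof.
  unfold dist3, Yc, Zc.
  pose proof (Rmax_l (Rabs (fst (fst p) - fst (fst q)))
       (Rmax (Rabs (snd (fst p) - snd (fst q))) (Rabs (snd p - snd q)))).
  pose proof (Rmax_r (Rabs (fst (fst p) - fst (fst q)))
       (Rmax (Rabs (snd (fst p) - snd (fst q))) (Rabs (snd p - snd q)))).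
  pose proof (Rmax_l (Rabs (snd (fst p) - snd (fst q))) (Rabs (snd p - snd q))).
  pose proof (Rmax_r (Rabs (snd (fst p) - snd (fst q))) (Rabs (snd p - snd q))).
  lra.
Qed.

Lemma dist3_lt p q e : Rabs (fst (fst p) - fst (fst q)) < e -> Rabs (Yc p - Yc q) < e ->
  Rabs (Zc p - Zc q) < e -> dist3 p q < e.
Proof.
  unfold dist3, Yc, Zc. intros. apply Rmax_lub_lt; auto. apply Rmax_lub_lt; auto.
Qed.

Lemma dist3_sym p q : dist3 p q = dist3 q p.
Proof.
  unfold dist3. rewrite (Rabs_minus_sym (fst (fst p))), (Rabs_minus_sym (snd (fst p))),
    (Rabs_minus_sym (snd p)). reflexivity.
Qed.

Lemma dist3_tri p q r : dist3 p r <= dist3 p q + dist3 q r.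
Proof.
  destruct (dist3_bounds p q) as [A1 [A2 A3]]. destruct (dist3_bounds q r) as [B1 [B2 B3]].
  unfold dist3 at 1. fold (Yc p) (Yc r) (Zc p) (Zc r).
  apply Rmax_lub; [|apply Rmax_lub].
  - replace (fst (fst p) - fst (fst r)) with ((fst (fst p) - fst (fst q)) + (fst (fst q) - fst (fst r))) by ring.
    eapply Rle_trans; [apply Rabs_triang|lra].
  - replace (Yc p - Yc r) with ((Yc p - Yc q) + (Yc q - Yc r)) by ring.
    eapply Rle_trans; [apply Rabs_triang|lra].
  - replace (Zc p - Zc r) with ((Zc p - Zc q) + (Zc q - Zc r)) by ring.
    eapply Rle_trans; [apply Rabs_triang|lra].
Qed.

Lemma atan_ratio (D X : R) : 0 < D -> D^2 + X^2 = 1 ->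
  cos (atan (X / D)) = D /\ sin (atan (X / D)) = X.
Proof.
  intros HD H. rewrite cos_atan, sin_atan.
  assert (E : sqrt (1 + (X / D)²) = / D).
  { apply sqrt_lem_1.
    - unfold Rsqr. assert (0 <= (X/D)*(X/D)) by nra. lra.
    - left. apply Rinv_0_lt_compat. lra.
    - unfold Rsqr. transitivity ((D^2 + X^2) / (D*D)).
      + rewrite H. field. lra.
      + field. lra. }
  rewrite E. split; field; lra.
Qed.

Lemma atan_lt1 (r : R) : Rabs r < 1 -> - (PI/4) < atan r < PI/4.
Proof.
  intros H. apply Rabs_def2 in H. destruct H.
  rewrite <- atan_1. split.
  - rewrite <- atan_opp. apply atan_increasing. lra.
  - apply atan_increasing. lra.
Qed.

Lemma ang_close p q : unitp p -> unitp q -> close p q ->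
  - (PI/4) < Ang p q < PI/4 /\ rotated p q (Ang p q).
Proof.
  unfold unitp, close, Ang, rotated, dotp, crossp. intros Hp Hq Hd.
  destruct (dist3_bounds p q) as [H1 [H2 _]].
  set (y := Yc p) in *. set (z := Zc p) in *. set (y' := Yc q) in *. set (z' := Zc q) in *.
  assert (Hy : Rabs (y - y') < 1/10) by lra. assert (Hz : Rabs (z - z') < 1/10) by lra.
  apply Rabs_def2 in Hy. apply Rabs_def2 in Hz.
  set (D := y*y' + z*z'). set (X := y*z' - z*y').
  assert (HDX : D^2 + X^2 = 1).
  { unfold D, X. replace 1 with ((y^2+z^2)*(y'^2+z'^2)) by (rewrite Hp, Hq; ring). ring. }
  assert (HD : D = 1 - ((y-y')^2 + (z-z')^2)/2).
  { assert (E: (y-y')^2+(z-z')^2 = (y^2+z^2)+(y'^2+z'^2) - 2*D) by (unfold D; ring).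
    rewrite Hp, Hq in E. lra. }
  assert (HD0 : 98/100 < D) by nra.
  assert (HX : Rabs (X / D) < 1).
  { assert (X^2 < 1 - (98/100)^2) by nra.
    apply Rabs_def1.
    - apply Rmult_lt_reg_r with D; [lra|]. unfold Rdiv. rewrite Rmult_assoc, Rinv_l; nra.
    - apply Rmult_lt_reg_r with D; [lra|]. unfold Rdiv. rewrite Rmult_assoc, Rinv_l; nra. }
  split; [apply atan_lt1; exact HX|].
  destruct (atan_ratio D X) as [Ec Es]; [lra|exact HDX|].
  rewrite Ec, Es. unfold D, X. split.
  - transitivity (y' * (y^2+z^2)); [rewrite Hp; ring| ring].
  - transitivity (z' * (y^2+z^2)); [rewrite Hp; ring| ring].
Qed.

Lemma ang_rot p q a : unitp p -> rotated p q a -> - (PI/2) < a < PI/2 -> Ang p q = a.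
Proof.
  unfold unitp, rotated, Ang, dotp, crossp. intros Hp [E1 E2] Ha.
  assert (Ed : Yc p * Yc q + Zc p * Zc q = cos a).
  { rewrite E1, E2. replace (cos a) with (cos a * (Yc p ^2 + Zc p ^2)) at 3 by (rewrite Hp; ring). ring. }
  assert (Ex : Yc p * Zc q - Zc p * Yc q = sin a).
  { rewrite E1, E2. replace (sin a) with (sin a * (Yc p ^2 + Zc p ^2)) at 3 by (rewrite Hp; ring). ring. }
  rewrite Ed, Ex. fold (tan a). apply atan_tan. lra.
Qed.

Lemma rot_compose p q r a b : rotated p q a -> rotated q r b -> rotated p r (a + b).
Proof.
  unfold rotated. intros [E1 E2] [E3 E4]. rewrite cos_plus, sin_plus, E3, E4, E1, E2. split; ring.
Qed.

Lemma rot_unique p r a b : unitp p -> rotated p r a -> rotated p r b ->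
  - (PI/2) < a < PI/2 -> - (PI/2) < b < PI/2 -> a = b.
Proof.
  intros Hp Ha Hb Ia Ib. rewrite <- (ang_rot p r a), <- (ang_rot p r b); auto.
Qed.

Fixpoint wsum (g : nat -> Rpt) (N : nat) : R :=
  match N with O => 0 | S n => wsum g n + Ang (g n) (g (S n)) end.

Lemma telescope (g h : nat -> Rpt) (N : nat) :
  (forall i, (i <= N)%nat -> unitp (g i) /\ unitp (h i) /\ close (h i) (g i)) ->
  (forall i, (i < N)%nat -> close (g i) (g (S i)) /\ close (h i) (h (S i))) ->
  wsum g N - wsum h N = Ang (h N) (g N) - Ang (h O) (g O).
Proof.
  pose proof PI_RGT_0.
  induction N as [|N IH]; intros Hu Hc.
  - simpl. ring.
  - simpl.
    assert (E : wsum g N - wsum h N = Ang (h N) (g N) - Ang (h O) (g O)).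
    { apply IH; intros; [apply Hu; lia| apply Hc; lia]. }
    destruct (Hu N ltac:(lia)) as [ugN [uhN chgN]].
    destruct (Hu (S N) ltac:(lia)) as [ugS [uhS chgS]].
    destruct (Hc N ltac:(lia)) as [cg ch].
    destruct (ang_close _ _ uhN ugN chgN) as [Ic Rc].
    destruct (ang_close _ _ ugN ugS cg) as [Id Rd].
    destruct (ang_close _ _ uhN uhS ch) as [Ia Ra].
    destruct (ang_close _ _ uhS ugS chgS) as [Ib Rb].
    pose proof (rot_compose _ _ _ _ _ Rc Rd) as R1.
    pose proof (rot_compose _ _ _ _ _ Ra Rb) as R2.
    pose proof (rot_unique _ _ _ _ uhN R1 R2 ltac:(lra) ltac:(lra)).
    lra.
Qed.

Definition cont_sq (H : R -> R -> Rpt) : Prop :=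
  forall t u, 0 <= t <= 1 -> 0 <= u <= 1 -> forall e, 0 < e ->
       exists dl, 0 < dl /\ forall t' u', 0 <= t' <= 1 -> 0 <= u' <= 1 ->
         Rabs (t' - t) < dl -> Rabs (u' - u) < dl -> dist3 (H t' u') (H t u) < e.

Lemma valadh_near un l : ValAdh un l -> forall N e, 0 < e ->
  exists p, (N <= p)%nat /\ Rabs (un p - l) < e.
Proof.
  intros H N e He.
  destruct (H (disc l (mkposreal e He)) N) as [p [Hp Hv]].
  - exists (mkposreal e He). intros x Hx. exact Hx.
  - exists p. split; auto.
Qed.

Lemma valadh_in01 un l : (forall n, 0 <= un n <= 1) -> ValAdh un l -> 0 <= l <= 1.
Proof.
  intros Hu H. split.
  - destruct (Rle_dec 0 l) as [|Hl]; auto.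
    destruct (valadh_near un l H 0 (-l)) as [p [_ Hp]]; [lra|].
    specialize (Hu p). apply Rabs_def2 in Hp. lra.
  - destruct (Rle_dec l 1) as [|Hl]; auto.
    destruct (valadh_near un l H 0 (l-1)) as [p [_ Hp]]; [lra|].
    specialize (Hu p). apply Rabs_def2 in Hp. lra.
Qed.

Lemma inv_mono (N m : nat) : (N <= m)%nat -> / (INR m + 1) <= / (INR N + 1).
Proof.
  intros H. apply Rinv_le_contravar.
  - pose proof (pos_INR N). lra.
  - apply le_INR in H. lra.
Qed.

Lemma uc2 (H : R -> R -> Rpt) : cont_sq H -> forall e, 0 < e ->
  exists dl, 0 < dl /\ forall t u t' u', 0 <= t <= 1 -> 0 <= u <= 1 ->
    0 <= t' <= 1 -> 0 <= u' <= 1 ->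
    Rabs (t' - t) < dl -> Rabs (u' - u) < dl -> dist3 (H t' u') (H t u) < e.
Proof.
  intros Hc e He. apply NNPP. intro Hno.
  assert (Hs : forall n : nat, {x : R*R*R*R |
     let t := fst (fst (fst x)) in let u := snd (fst (fst x)) in
     let t' := snd (fst x) in let u' := snd x in
     0 <= t <= 1 /\ 0 <= u <= 1 /\ 0 <= t' <= 1 /\ 0 <= u' <= 1 /\
     Rabs (t' - t) < / (INR n + 1) /\ Rabs (u' - u) < / (INR n + 1) /\
     e <= dist3 (H t' u') (H t u)}).
  { intro n. apply constructive_indefinite_description.
    apply NNPP. intro Hn. apply Hno. exists (/ (INR n + 1)). split.
    { apply Rinv_0_lt_compat. pose proof (pos_INR n). lra. }
    intros t u t' u' H1 H2 H3 H4 H5 H6.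
    destruct (Rlt_le_dec (dist3 (H t' u') (H t u)) e) as [|Hle]; auto.
    exfalso. apply Hn. exists (t, u, t', u'). simpl. tauto. }
  set (tn n := fst (fst (fst (proj1_sig (Hs n))))).
  set (un n := snd (fst (fst (proj1_sig (Hs n))))).
  set (tn' n := snd (fst (proj1_sig (Hs n)))).
  set (un' n := snd (proj1_sig (Hs n))).
  assert (P : forall n, 0 <= tn n <= 1 /\ 0 <= un n <= 1 /\ 0 <= tn' n <= 1 /\ 0 <= un' n <= 1 /\
     Rabs (tn' n - tn n) < / (INR n + 1) /\ Rabs (un' n - un n) < / (INR n + 1) /\
     e <= dist3 (H (tn' n) (un' n)) (H (tn n) (un n))).
  { intro n. exact (proj2_sig (Hs n)). }
  destruct (Bolzano_Weierstrass tn (fun c => 0 <= c <= 1) (compact_P3 0 1)) as [l1 Hl1].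
  { intro n. apply P. }
  assert (Hphi : forall n, {p : nat | (n <= p)%nat /\ Rabs (tn p - l1) < / (INR n + 1)}).
  { intro n. apply constructive_indefinite_description. apply valadh_near; auto.
    apply Rinv_0_lt_compat. pose proof (pos_INR n). lra. }
  set (phi n := proj1_sig (Hphi n)).
  set (vn n := un (phi n)).
  destruct (Bolzano_Weierstrass vn (fun c => 0 <= c <= 1) (compact_P3 0 1)) as [l2 Hl2].
  { intro n. apply P. }
  assert (I1 : 0 <= l1 <= 1) by (apply (valadh_in01 tn); auto; intro; apply P).
  assert (I2 : 0 <= l2 <= 1) by (apply (valadh_in01 vn); auto; intro; apply P).
  destruct (Hc l1 l2 I1 I2 (e/2) ltac:(lra)) as [dl0 [Hdl0 Hcl]].
  destruct (archimed (2 / dl0)) as [Hup _].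
  set (N := Z.to_nat (up (2 / dl0))).
  assert (Hpos : 0 < 2/dl0) by (apply Rdiv_lt_0_compat; lra).
  assert (HN : / (INR N + 1) < dl0 / 2).
  { assert (INR N > 2/dl0).
    { unfold N. rewrite INR_IZR_INZ. rewrite Z2Nat.id; [lra|].
      apply le_IZR. lra. }
    apply (Rmult_lt_reg_l (INR N + 1)); [lra|].
    rewrite Rinv_r by lra.
    assert (2/dl0 * (dl0/2) = 1) by (field; lra).
    pose proof (pos_INR N). nra. }
  destruct (valadh_near vn l2 Hl2 N (dl0/2) ltac:(lra)) as [p [Hp Hvp]].
  set (m := phi p).
  assert (Hm : (p <= m)%nat /\ Rabs (tn m - l1) < / (INR p + 1)) by exact (proj2_sig (Hphi p)).
  destruct Hm as [Hpm Htm].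
  pose proof (inv_mono N p Hp). pose proof (inv_mono p m Hpm).
  destruct (P m) as [Q1 [Q2 [Q3 [Q4 [Q5 [Q6 Q7]]]]]].
  assert (Hvp' : Rabs (un m - l2) < dl0/2) by exact Hvp.
  apply Rabs_def2 in Htm. apply Rabs_def2 in Hvp'. apply Rabs_def2 in Q5. apply Rabs_def2 in Q6.
  assert (D1 : dist3 (H (tn m) (un m)) (H l1 l2) < e/2).
  { apply Hcl; auto; apply Rabs_def1; lra. }
  assert (D2 : dist3 (H (tn' m) (un' m)) (H l1 l2) < e/2).
  { apply Hcl; auto; apply Rabs_def1; lra. }
  pose proof (dist3_tri (H (tn' m) (un' m)) (H l1 l2) (H (tn m) (un m))).
  rewrite (dist3_sym (H l1 l2)) in H2. lra.
Qed.

Lemma inC_unit p : inC p -> unitp p.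
Proof.
  intros [tau [s [_ E]]]. subst p. unfold unitp, emb, Yc, Zc. simpl.
  pose proof (sin2_cos2 s). unfold Rsqr in H. lra.
Qed.

Lemma ang_self q : Ang q q = 0.
Proof.
  unfold Ang, crossp. replace (Yc q * Zc q - Zc q * Yc q) with 0 by ring.
  unfold Rdiv. rewrite Rmult_0_l. apply atan_0.
Qed.

Lemma not_contr (c : R -> Rpt) :
  (forall t, 0 <= t <= 1 -> Yc (c t) = cos (2*PI*t) /\ Zc (c t) = sin (2*PI*t)) ->
  ~ contractible_in_C c.
Proof.
  intros Hc [H [Hcont [HinC [H0 [[q Hq] Hper]]]]].
  pose proof PI_RGT_0 as Hpi.
  destruct (uc2 H Hcont (1/10) ltac:(lra)) as [dl [Hdl Huc]].
  destruct (archimed (4 + / dl)) as [Hup _].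
  assert (Hdl' : 0 < / dl) by (apply Rinv_0_lt_compat; lra).
  set (N := Z.to_nat (up (4 + / dl))).
  assert (HN : INR N > 4 + / dl).
  { unfold N. rewrite INR_IZR_INZ. rewrite Z2Nat.id; [lra|].
    apply le_IZR. lra. }
  assert (HN0 : 0 < INR N) by lra.
  assert (Hstep : / INR N < dl).
  { apply (Rmult_lt_reg_l (INR N)); [lra|]. rewrite Rinv_r by lra.
    apply (Rmult_lt_reg_l (/ dl)); [lra|]. field_simplify; lra. }
  set (pt (i : nat) := INR i / INR N).
  assert (Hpt : forall i, (i <= N)%nat -> 0 <= pt i <= 1).
  { intros i Hi. unfold pt. apply le_INR in Hi. pose proof (pos_INR i). split.
    - unfold Rdiv. apply Rmult_le_pos; [lra|]. left; apply Rinv_0_lt_compat; lra.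
    - unfold Rdiv. apply (Rmult_le_reg_l (INR N)); [lra|].
      replace (INR N * (INR i * / INR N)) with (INR i) by (field; lra). lra. }
  assert (HptS : forall i, pt (S i) - pt i = / INR N).
  { intro i. unfold pt. rewrite S_INR. field. lra. }
  assert (Hpt0 : pt 0%nat = 0) by (unfold pt; simpl; field; lra).
  assert (HptN : pt N = 1) by (unfold pt; field; lra).
  set (g (j : nat) (i : nat) := H (pt i) (pt j)).
  assert (Hunit : forall i j, (i <= N)%nat -> (j <= N)%nat -> unitp (g j i)).
  { intros. apply inC_unit. apply HinC; apply Hpt; auto. }
  assert (Hclose : forall i j i' j', (i <= N)%nat -> (j <= N)%nat -> (i' <= N)%nat -> (j' <= N)%nat ->
     Rabs (pt i - pt i') < dl -> Rabs (pt j - pt j') < dl -> close (g j i) (g j' i')).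
  { intros. unfold close, g. apply Huc; auto. }
  assert (Hsmall : forall i, Rabs (pt i - pt (S i)) < dl /\ Rabs (pt (S i) - pt i) < dl).
  { intro i. rewrite HptS. rewrite Rabs_minus_sym, HptS. rewrite Rabs_right; [lra|].
    left; apply Rinv_0_lt_compat; lra. }
  assert (Hzero : forall i, Rabs (pt i - pt i) < dl).
  { intro. replace (pt i - pt i) with 0 by ring. rewrite Rabs_R0. lra. }
  assert (Hconst : forall j, (j <= N)%nat -> wsum (g j) N = wsum (g 0%nat) N).
  { induction j as [|j IH]; intros Hj; [reflexivity|].
    rewrite <- IH by lia.
    assert (E : wsum (g (S j)) N - wsum (g j) N = Ang (g j N) (g (S j) N) - Ang (g j O) (g (S j) O)).
    { apply telescope.
      - intros i Hi. split; [apply Hunit; lia|]. split; [apply Hunit; lia|].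
        apply Hclose; try lia; [apply Hzero| apply Hsmall].
      - intros i Hi. split; apply Hclose; try lia; try apply Hzero; apply Hsmall. }
    assert (E2 : g j N = g j O /\ g (S j) N = g (S j) O).
    { unfold g. rewrite HptN, Hpt0. split; symmetry; apply Hper; apply Hpt; lia. }
    destruct E2 as [E2 E3]. rewrite E2, E3 in E. lra. }
  assert (Hw0 : forall n, (n <= N)%nat -> wsum (g 0%nat) n = INR n * (2 * PI / INR N)).
  { induction n as [|n IH]; intros Hn; [simpl; ring|].
    simpl wsum. rewrite IH by lia. rewrite S_INR.
    assert (A : Ang (g 0%nat n) (g 0%nat (S n)) = 2 * PI / INR N).
    { unfold g. rewrite Hpt0. rewrite !H0 by (apply Hpt; lia).
      apply ang_rot.
      - destruct (Hc (pt n)) as [A1 A2]; [apply Hpt; lia|].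
        unfold unitp. rewrite A1, A2. pose proof (sin2_cos2 (2*PI*pt n)). unfold Rsqr in H1. lra.
      - destruct (Hc (pt n)) as [A1 A2]; [apply Hpt; lia|].
        destruct (Hc (pt (S n))) as [B1 B2]; [apply Hpt; lia|].
        unfold rotated. rewrite A1, A2, B1, B2.
        replace (2 * PI * pt (S n)) with (2 * PI * pt n + 2 * PI / INR N)
          by (unfold pt; rewrite S_INR; field; lra).
        rewrite cos_plus, sin_plus. split; ring.
      - split.
        + assert (0 < 2 * PI / INR N) by (apply Rdiv_lt_0_compat; lra). lra.
        + assert (/ INR N < / 4) by (apply Rinv_lt_contravar; nra).
          unfold Rdiv. nra. }
    rewrite A. ring. }
  assert (HwN : forall n, (n <= N)%nat -> wsum (g N) n = 0).
  { induction n as [|n IH]; intros Hn; [reflexivity|]. simpl. rewrite IH by lia.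
    unfold g. rewrite HptN. rewrite !Hq by (apply Hpt; lia).
    rewrite ang_self. ring. }
  pose proof (Hconst N (le_n N)) as E. rewrite HwN, Hw0 in E by lia.
  assert (INR N * (2 * PI / INR N) = 2 * PI) by (field; lra). lra.
Qed.

Definition Gf (d x : R) : R := exp (pdelta d * x) - exp (d * x).

Lemma dlim_lin (a x : R) : derivable_pt_lim (fun y => a * y) x a.
Proof.
  intros e He. exists (mkposreal e He). intros h Hh Hh'.
  replace ((a * (x + h) - a * x) / h - a) with 0 by (field; auto).
  rewrite Rabs_R0. auto.
Qed.

Lemma dlim_expa (a x : R) : derivable_pt_lim (fun y => exp (a * y)) x (a * exp (a * x)).
Proof.
  pose proof (derivable_pt_lim_comp (fun y => a * y) exp x a (exp (a * x)) (dlim_lin a x)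
    (derivable_pt_lim_exp (a * x))).
  unfold comp in H. rewrite Rmult_comm. exact H.
Qed.

Lemma dlim_G (d x : R) : derivable_pt_lim (Gf d) x
  (pdelta d * exp (pdelta d * x) - d * exp (d * x)).
Proof.
  apply (derivable_pt_lim_minus (fun y => exp (pdelta d * y)) (fun y => exp (d * y)));
    apply dlim_expa.
Qed.

Lemma G_cont (d : R) : continuity (Gf d).
Proof.
  intro x. apply derivable_continuous_pt. exists (pdelta d * exp (pdelta d * x) - d * exp (d * x)).
  apply dlim_G.
Qed.

Lemma G_0 d : Gf d 0 = 0.
Proof. unfold Gf. rewrite !Rmult_0_r, exp_0. ring. Qed.

Lemma p_lt_d d : 1 < d -> pdelta d < d.
Proof. unfold pdelta. intros. nra. Qed.

Lemma Phi_sq : Phi * Phi = Phi + 1.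
Proof.
  unfold Phi. pose proof (sqrt_sqrt 5 ltac:(lra)). field_simplify. nra.
Qed.

Lemma Phi_gt1 : 1 < Phi.
Proof.
  unfold Phi. assert (1 < sqrt 5).
  { rewrite <- sqrt_1. apply sqrt_lt_1; lra. } lra.
Qed.

Lemma pdelta_factor d : pdelta d = - ((d - Phi) * (d - 1 + Phi)).
Proof. unfold pdelta. pose proof Phi_sq. nra. Qed.

Lemma p_pos d : 1 < d -> d < Phi -> 0 < pdelta d.
Proof. intros. rewrite pdelta_factor. pose proof Phi_gt1. nra. Qed.

Lemma p_neg d : 1 < d -> Phi < d -> pdelta d < 0.
Proof. intros. rewrite pdelta_factor. pose proof Phi_gt1. nra. Qed.

(* critical point *)
Definition xc (d : R) : R := ln (pdelta d / d) / (d - pdelta d).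

Lemma xc_neg d : 1 < d -> d < Phi -> xc d < 0.
Proof.
  intros. pose proof (p_pos d H H0). pose proof (p_lt_d d H). unfold xc.
  assert (ln (pdelta d / d) < 0).
  { rewrite <- ln_1. apply ln_increasing. apply Rdiv_lt_0_compat; lra.
    apply (Rmult_lt_reg_r d); [lra|]. unfold Rdiv. rewrite Rmult_assoc, Rinv_l; lra. }
  unfold Rdiv at 1. assert (0 < / (d - pdelta d)) by (apply Rinv_0_lt_compat; lra). nra.
Qed.

Lemma exp_xc d : 1 < d -> d < Phi -> exp ((d - pdelta d) * xc d) = pdelta d / d.
Proof.
  intros. pose proof (p_pos d H H0). pose proof (p_lt_d d H). unfold xc.
  replace ((d - pdelta d) * (ln (pdelta d / d) / (d - pdelta d))) with (ln (pdelta d / d)) by (field; lra).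
  apply exp_ln. apply Rdiv_lt_0_compat; lra.
Qed.

Lemma Gderiv_form d c : pdelta d * exp (pdelta d * c) - d * exp (d * c)
  = exp (pdelta d * c) * (pdelta d - d * exp ((d - pdelta d) * c)).
Proof.
  replace (d * c) with (pdelta d * c + (d - pdelta d) * c) by ring. rewrite exp_plus. ring.
Qed.

Lemma G_incr d x y : 1 < d -> d < Phi -> x < y -> y <= xc d -> Gf d x < Gf d y.
Proof.
  intros. destruct (MVT_cor2 (Gf d) _ x y H1 (fun c _ => dlim_G d c)) as [c [E Hc]].
  pose proof (p_pos d H H0). pose proof (p_lt_d d H).
  assert (exp ((d - pdelta d) * c) < pdelta d / d).
  { rewrite <- exp_xc by auto. apply exp_increasing. apply Rmult_lt_compat_l; lra. }
  rewrite Gderiv_form in E.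
  assert (0 < pdelta d - d * exp ((d - pdelta d) * c)).
  { assert (d * (pdelta d / d) = pdelta d) by (field; lra). nra. }
  pose proof (exp_pos (pdelta d * c)).
  assert (0 < exp (pdelta d * c) * (pdelta d - d * exp ((d - pdelta d) * c))) by (apply Rmult_lt_0_compat; lra).
  nra.
Qed.

Lemma G_decr d x y : 1 < d -> d < Phi -> xc d <= x -> x < y -> Gf d y < Gf d x.
Proof.
  intros. destruct (MVT_cor2 (Gf d) _ x y H2 (fun c _ => dlim_G d c)) as [c [E Hc]].
  pose proof (p_pos d H H0). pose proof (p_lt_d d H).
  assert (pdelta d / d < exp ((d - pdelta d) * c)).
  { rewrite <- exp_xc by auto. apply exp_increasing. apply Rmult_lt_compat_l; lra. }
  rewrite Gderiv_form in E.
  assert (pdelta d - d * exp ((d - pdelta d) * c) < 0).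
  { assert (d * (pdelta d / d) = pdelta d) by (field; lra). nra. }
  pose proof (exp_pos (pdelta d * c)).
  assert (0 < exp (pdelta d * c) * - (pdelta d - d * exp ((d - pdelta d) * c))) by (apply Rmult_lt_0_compat; lra).
  nra.
Qed.

Lemma G_decr_all d x y : 1 < d -> Phi < d -> x < y -> Gf d y < Gf d x.
Proof.
  intros. destruct (MVT_cor2 (Gf d) _ x y H1 (fun c _ => dlim_G d c)) as [c [E Hc]].
  pose proof (p_neg d H H0).
  pose proof (exp_pos (pdelta d * c)). pose proof (exp_pos (d * c)).
  assert (0 < - (pdelta d * exp (pdelta d * c) - d * exp (d * c))) by nra.
  nra.
Qed.

Lemma G_small d c : 1 < d -> d < Phi -> 0 < c -> Gf d (ln c / pdelta d) < c.
Proof.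
  intros. pose proof (p_pos d H H0). unfold Gf.
  replace (pdelta d * (ln c / pdelta d)) with (ln c) by (field; lra).
  rewrite exp_ln by lra. pose proof (exp_pos (d * (ln c / pdelta d))). lra.
Qed.

Lemma G_big d C : 1 < d -> Phi < d -> 0 < C -> ln (C + 2) / pdelta d <= 0 /\ C < Gf d (ln (C + 2) / pdelta d).
Proof.
  intros. pose proof (p_neg d H H0).
  assert (0 < ln (C+2)) by (rewrite <- ln_1; apply ln_increasing; lra).
  assert (Hx : ln (C + 2) / pdelta d <= 0).
  { unfold Rdiv. assert (/ pdelta d < 0) by (apply Rinv_lt_0_compat; lra). nra. }
  split; auto. unfold Gf.
  replace (pdelta d * (ln (C + 2) / pdelta d)) with (ln (C+2)) by (field; lra).
  rewrite exp_ln by lra.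
  assert (exp (d * (ln (C + 2) / pdelta d)) <= 1).
  { rewrite <- exp_0. destruct (Req_dec (d * (ln (C + 2) / pdelta d)) 0) as [E|E].
    - rewrite E. lra.
    - left. apply exp_increasing. nra. }
  lra.
Qed.

Definition incr_on (f : R -> R) (a b : R) : Prop :=
  forall x y, a <= x -> x < y -> y <= b -> f x < f y.
Definition inv_on (f : R -> R) (a b L : R) : R :=
  epsilon (inhabits 0) (fun x => a <= x <= b /\ f x = L).

Lemma incr_le f a b x y : incr_on f a b -> a <= x -> x <= y -> y <= b -> f x <= f y.
Proof.
  intros H Hx Hxy Hy. destruct (Req_dec x y) as [E|E]; [subst; lra|].
  left. apply H; lra.
Qed.

Lemma incr_inj f a b x y : incr_on f a b -> a <= x <= b -> a <= y <= b -> f x = f y -> x = y.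
Proof.
  intros H Hx Hy E. destruct (Rtotal_order x y) as [L|[L|L]]; auto.
  - pose proof (H x y ltac:(lra) L ltac:(lra)). lra.
  - pose proof (H y x ltac:(lra) L ltac:(lra)). lra.
Qed.

Lemma inv_spec f a b L : continuity f -> a <= b -> f a <= L <= f b ->
  a <= inv_on f a b L <= b /\ f (inv_on f a b L) = L.
Proof.
  intros Hc Hab HL. unfold inv_on. apply epsilon_spec.
  destruct (IVT_cor (fun x => f x - L) a b) as [z [Hz Ez]]; auto.
  - intro x. apply continuity_pt_minus; [apply Hc| apply continuity_pt_const; intros ? ?; auto].
  - assert (0 <= f b - L) by lra. assert (f a - L <= 0) by lra. nra.
  - exists z. split; auto. lra.
Qed.

Lemma inv_unique f a b L x : incr_on f a b -> continuity f -> a <= b ->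
  a <= x <= b -> f x = L -> inv_on f a b L = x.
Proof.
  intros Hi Hc Hab Hx E.
  assert (HL : f a <= L <= f b) by (subst; split; apply (incr_le f a b); auto; lra).
  destruct (inv_spec f a b L Hc Hab HL) as [H1 H2].
  apply (incr_inj f a b); auto. lra.
Qed.

Lemma inv_cont f a b : incr_on f a b -> continuity f -> a <= b ->
  forall L0, f a <= L0 <= f b -> forall e, 0 < e -> exists dl, 0 < dl /\
    forall L, f a <= L <= f b -> Rabs (L - L0) < dl -> Rabs (inv_on f a b L - inv_on f a b L0) < e.
Proof.
  intros Hi Hc Hab L0 HL0 e He.
  destruct (inv_spec f a b L0 Hc Hab HL0) as [Hx0 Ex0].
  set (x0 := inv_on f a b L0) in *.
  assert (Lo : exists d1, 0 < d1 /\ forall L, f a <= L <= f b -> L0 - d1 < L -> x0 - e < inv_on f a b L).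
  { destruct (Rlt_dec (x0 - e/2) a) as [Ha|Ha].
    - exists 1. split; [lra|]. intros L HL _. destruct (inv_spec f a b L Hc Hab HL). lra.
    - apply Rnot_lt_le in Ha. set (xm := x0 - e/2).
      assert (f xm < L0) by (rewrite <- Ex0; apply Hi; unfold xm; lra).
      exists (L0 - f xm). split; [lra|]. intros L HL HL'.
      destruct (inv_spec f a b L Hc Hab HL) as [I1 I2].
      destruct (Rle_dec (inv_on f a b L) xm) as [Hle|Hle]; [|unfold xm in Hle; lra].
      pose proof (incr_le f a b (inv_on f a b L) xm Hi ltac:(lra) Hle ltac:(unfold xm; lra)). lra. }
  assert (Hi' : exists d2, 0 < d2 /\ forall L, f a <= L <= f b -> L < L0 + d2 -> inv_on f a b L < x0 + e).
  { destruct (Rlt_dec b (x0 + e/2)) as [Hb|Hb].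
    - exists 1. split; [lra|]. intros L HL _. destruct (inv_spec f a b L Hc Hab HL). lra.
    - apply Rnot_lt_le in Hb. set (xp := x0 + e/2).
      assert (L0 < f xp) by (rewrite <- Ex0; apply Hi; unfold xp; lra).
      exists (f xp - L0). split; [lra|]. intros L HL HL'.
      destruct (inv_spec f a b L Hc Hab HL) as [I1 I2].
      destruct (Rle_dec xp (inv_on f a b L)) as [Hle|Hle]; [|unfold xp in Hle; lra].
      pose proof (incr_le f a b xp (inv_on f a b L) Hi ltac:(unfold xp; lra) Hle ltac:(lra)). lra. }
  destruct Lo as [d1 [Hd1 P1]]. destruct Hi' as [d2 [Hd2 P2]].
  exists (Rmin d1 d2). split; [apply Rmin_pos; auto|].
  intros L HL HLL. pose proof (Rmin_l d1 d2). pose proof (Rmin_r d1 d2).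
  apply Rabs_def2 in HLL. apply Rabs_def1.
  - pose proof (P2 L HL ltac:(lra)). lra.
  - pose proof (P1 L HL ltac:(lra)). lra.
Qed.

Definition lev (g k s : R) : R := g * (1 + k * sin s).

Lemma Rpower_exp x a : Rpower (exp x) a = exp (a * x).
Proof. unfold Rpower. rewrite ln_exp. reflexivity. Qed.

Lemma gfun_exp d g k x s :
  gfun d g k (exp x) s = exp ((d^2 - d) * x) * (lev g k s - Gf d x).
Proof.
  unfold gfun, lev, Gf. rewrite !Rpower_exp.
  replace (d^2 * x) with ((d^2 - d) * x + d * x) by ring.
  replace (exp x) with (exp ((d^2 - d) * x + pdelta d * x))
    by (f_equal; unfold pdelta; ring).
  rewrite !exp_plus. ring.
Qed.

Lemma gfun_zero_iff d g k tau s : 0 < tau ->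
  (gfun d g k tau s = 0 <-> lev g k s = Gf d (ln tau)).
Proof.
  intros Ht. rewrite <- (exp_ln tau) at 1 by auto. rewrite gfun_exp.
  pose proof (exp_pos ((d^2 - d) * ln tau)). split; intro H'.
  - apply Rmult_integral in H'. destruct H'; lra.
  - rewrite H'. ring.
Qed.

Lemma Zset_iff d g k p : Zset d g k p <->
  exists tau s, 0 < tau <= 1 /\ lev g k s = Gf d (ln tau) /\ p = emb tau s.
Proof.
  unfold Zset. split; intros [tau [s [H1 [H2 H3]]]]; exists tau, s; split; auto; split; auto;
    apply gfun_zero_iff; auto; lra.
Qed.

Lemma slice_iff d g k tau p : slice (Zset d g k) tau p <->
  0 < tau <= 1 /\ exists s, lev g k s = Gf d (ln tau) /\ p = emb tau s.
Proof.
  unfold slice. rewrite Zset_iff. split.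
  - intros [[t [s [H1 [H2 H3]]]] H4]. subst p. unfold tcoord, emb in H4. simpl in H4. subst t.
    split; auto. exists s. auto.
  - intros [H1 [s [H2 H3]]]. split.
    + exists tau, s. auto.
    + subst p. reflexivity.
Qed.

Lemma lev_range g k s : 0 < g -> 0 < k -> g * (1 - k) <= lev g k s <= g * (1 + k).
Proof.
  intros. unfold lev. pose proof (SIN_bound s).
  assert (0 <= g * k) by nra.
  assert (0 <= (g*k) * (sin s + 1)) by (apply Rmult_le_pos; lra).
  assert (0 <= (g*k) * (1 - sin s)) by (apply Rmult_le_pos; lra).
  split; nra.
Qed.

Lemma emb_eq tau y z s : y = cos s -> z = sin s -> (tau, y, z) = emb tau s.
Proof. intros; subst; reflexivity. Qed.

Section Slices.
Variables (d g k : R).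
Hypothesis (hg : 0 < g) (hk : 0 < k < 1).

Lemma lev_sin s v : lev g k s = g * (1 + k * v) <-> sin s = v.
Proof.
  unfold lev. split; intro H.
  - assert (g * k * (sin s - v) = 0) by (rewrite Rmult_comm in H; nra).
    apply Rmult_integral in H0. destruct H0 as [H0|H0]; [|lra].
    apply Rmult_integral in H0. lra.
  - rewrite H. reflexivity.
Qed.

Lemma slice_two tau : 0 < tau <= 1 -> g * (1 - k) < Gf d (ln tau) < g * (1 + k) ->
  has_exactly_two (slice (Zset d g k) tau).
Proof.
  intros Ht HG.
  set (v := (Gf d (ln tau) / g - 1) / k).
  assert (Ev : Gf d (ln tau) = g * (1 + k * v)) by (unfold v; field; lra).
  assert (Hv : -1 < v < 1).
  { unfold v. split.
    - apply (Rmult_lt_reg_l k); [lra|]. apply (Rmult_lt_reg_l g); [lra|].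
      replace (g * (k * ((Gf d (ln tau) / g - 1) / k))) with (Gf d (ln tau) - g) by (field; lra). nra.
    - apply (Rmult_lt_reg_l k); [lra|]. apply (Rmult_lt_reg_l g); [lra|].
      replace (g * (k * ((Gf d (ln tau) / g - 1) / k))) with (Gf d (ln tau) - g) by (field; lra). nra. }
  set (w := sqrt (1 - v^2)).
  assert (Hw : 0 < w) by (apply sqrt_lt_R0; nra).
  assert (Hw2 : w^2 = 1 - v^2) by (unfold w; rewrite <- Rsqr_pow2; apply Rsqr_sqrt; nra).
  exists (tau, w, v), (tau, -w, v). split.
  { intro E. injection E. lra. }
  intro p. rewrite slice_iff. split.
  - intros [_ [s [Hs Hp]]]. rewrite Ev in Hs. apply lev_sin in Hs.
    subst p. unfold emb. rewrite Hs.
    assert (cos s ^2 = w^2) by (rewrite Hw2, <- Hs; pose proof (sin2_cos2 s); unfold Rsqr in *; lra).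
    assert (cos s = w \/ cos s = - w) as [E|E] by (apply Rsqr_eq; unfold Rsqr; lra); rewrite E; auto.
  - intros Hp. split; auto.
    assert (Hu : forall y, y^2 + v^2 = 1 -> exists s, lev g k s = Gf d (ln tau) /\ (tau, y, v) = emb tau s).
    { intros y Hy. destruct (circ_param y v Hy) as [s [_ [E1 E2]]]. exists s. split.
      - rewrite Ev. apply lev_sin. auto.
      - apply emb_eq; auto. }
    destruct Hp as [Hp|Hp]; subst p; apply Hu; nra.
Qed.

Lemma c3 : cos (3 * PI / 2) = 0.
Proof. replace (3*PI/2) with (3*(PI/2)) by field. apply cos_3PI2. Qed.
Lemma s3 : sin (3 * PI / 2) = -1.
Proof. replace (3*PI/2) with (3*(PI/2)) by field. apply sin_3PI2. Qed.

Lemma slice_bot tau : 0 < tau <= 1 -> Gf d (ln tau) = g * (1 - k) ->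
  is_singleton (slice (Zset d g k) tau) (emb tau (3 * PI / 2)).
Proof.
  intros Ht HG p. rewrite slice_iff. split.
  - intros [_ [s [Hs Hp]]]. rewrite HG in Hs.
    replace (g * (1 - k)) with (g * (1 + k * (-1))) in Hs by ring. apply lev_sin in Hs.
    subst p. unfold emb. rewrite Hs, c3, s3.
    assert (cos s ^2 = 0) by (pose proof (sin2_cos2 s); unfold Rsqr in *; nra).
    assert (cos s = 0) by nra. rewrite H0. reflexivity.
  - intros Hp. split; auto. exists (3 * PI / 2). split; auto.
    rewrite HG. unfold lev. rewrite s3. ring.
Qed.

Lemma slice_top tau : 0 < tau <= 1 -> Gf d (ln tau) = g * (1 + k) ->
  is_singleton (slice (Zset d g k) tau) (emb tau (PI / 2)).
Proof.
  intros Ht HG p. rewrite slice_iff. split.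
  - intros [_ [s [Hs Hp]]]. rewrite HG in Hs.
    replace (g * (1 + k)) with (g * (1 + k * 1)) in Hs by ring. apply lev_sin in Hs.
    subst p. unfold emb. rewrite Hs, cos_PI2, sin_PI2.
    assert (cos s ^2 = 0) by (pose proof (sin2_cos2 s); unfold Rsqr in *; nra).
    assert (cos s = 0) by nra. rewrite H0. reflexivity.
  - intros Hp. split; auto. exists (PI / 2). split; auto.
    rewrite HG. unfold lev. rewrite sin_PI2. ring.
Qed.

Lemma slice_empty tau : (~ (0 < tau <= 1)) \/ Gf d (ln tau) < g * (1 - k) \/ g * (1 + k) < Gf d (ln tau) ->
  is_empty (slice (Zset d g k) tau).
Proof.
  intros H p Hp. rewrite slice_iff in Hp. destruct Hp as [Ht [s [Hs _]]].
  pose proof (lev_range g k s hg ltac:(lra)). destruct H as [H|[H|H]]; lra.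
Qed.

End Slices.

Lemma fold_deriv d g k tau s0 : cos s0 = 0 ->
  derivable_pt_lim (fun s => gfun d g k tau s) s0 0.
Proof.
  intros Hc.
  set (C0 := Rpower tau (d ^ 2) + g * Rpower tau (d ^ 2 - d) - tau).
  set (C1 := g * Rpower tau (d ^ 2 - d) * k).
  assert (E : (fun s => gfun d g k tau s) = (fun s => C0 + C1 * sin s)).
  { apply functional_extensionality. intro s. unfold gfun, C0, C1. ring. }
  rewrite E. replace 0 with (0 + C1 * cos s0) by (rewrite Hc; ring).
  apply (derivable_pt_lim_plus (fun _ => C0) (fun s => C1 * sin s)).
  - apply derivable_pt_lim_const.
  - apply (derivable_pt_lim_scal sin C1 s0 (cos s0)). apply derivable_pt_lim_sin.
Qed.

(* transfer to U = everything *)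
Definition fullU (Z : Rpt -> Prop) : Rpt -> Prop := fun p => (fun _ : Rpt => True) p /\ Z p.

Lemma slice_full_iff Z tau p : slice (fun p => (fun _ : Rpt => True) p /\ Z p) tau p <-> slice Z tau p.
Proof. unfold slice. tauto. Qed.

Lemma two_full Z tau : has_exactly_two (slice Z tau) ->
  has_exactly_two (slice (fun p => (fun _ : Rpt => True) p /\ Z p) tau).
Proof.
  intros [q1 [q2 [H1 H2]]]. exists q1, q2. split; auto. intro p. rewrite slice_full_iff. apply H2.
Qed.

Lemma one_full Z tau q : is_singleton (slice Z tau) q ->
  has_exactly_one (slice (fun p => (fun _ : Rpt => True) p /\ Z p) tau).
Proof.
  intros H. exists q. intro p. rewrite slice_full_iff. apply H.
Qed.

Lemma empty_full Z tau : is_empty (slice Z tau) ->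
  is_empty (slice (fun p => (fun _ : Rpt => True) p /\ Z p) tau).
Proof.
  intros H p. rewrite slice_full_iff. apply H.
Qed.

Lemma open3_full : open3 (fun _ => True).
Proof. intros p _. exists 1. split; [lra|]. auto. Qed.

Definition contw (D : R -> Prop) (f : R -> R) : Prop :=
  forall y, D y -> forall e, 0 < e -> exists dl, 0 < dl /\
    forall y', D y' -> Rabs (y' - y) < dl -> Rabs (f y' - f y) < e.

Definition I01 (t : R) : Prop := 0 <= t <= 1.

Lemma cpt_eps f x : continuity_pt f x -> forall e, 0 < e -> exists dl, 0 < dl /\
  forall y, Rabs (y - x) < dl -> Rabs (f y - f x) < e.
Proof.
  intros H e He. destruct (H e He) as [dl [Hdl P]]. exists dl. split; auto.
  intros y Hy. destruct (Req_dec x y) as [E|E].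
  - subst. replace (f y - f y) with 0 by ring. rewrite Rabs_R0. auto.
  - apply (P y). split; [split; [exact I|auto]|]. simpl. unfold R_dist. auto.
Qed.

Lemma contw_of_cont D f : continuity f -> contw D f.
Proof.
  intros H y _ e He. destruct (cpt_eps f y (H y) e He) as [dl [Hdl P]].
  exists dl. split; auto.
Qed.

Lemma contw_comp D E f g : contw D f -> (forall y, D y -> E (f y)) -> contw E g ->
  contw D (fun y => g (f y)).
Proof.
  intros Hf Hm Hg y Hy e He.
  destruct (Hg (f y) (Hm y Hy) e He) as [d1 [Hd1 P1]].
  destruct (Hf y Hy d1 Hd1) as [d2 [Hd2 P2]].
  exists d2. split; [auto|]. intros y' Hy' Hyy. apply P1; auto.
Qed.

Lemma contw_sub D E f : (forall y, D y -> E y) -> contw E f -> contw D f.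
Proof.
  intros H Hf y Hy e He. destruct (Hf y (H y Hy) e He) as [dl [Hdl P]].
  exists dl. split; auto.
Qed.

Lemma cont01_of f1 f2 f3 : contw I01 f1 -> contw I01 f2 -> contw I01 f3 ->
  cont01 (fun t => (f1 t, f2 t, f3 t)).
Proof.
  intros H1 H2 H3 t Ht e He.
  destruct (H1 t Ht e He) as [d1 [Hd1 P1]].
  destruct (H2 t Ht e He) as [d2 [Hd2 P2]].
  destruct (H3 t Ht e He) as [d3 [Hd3 P3]].
  exists (Rmin d1 (Rmin d2 d3)). split.
  { apply Rmin_pos; auto. apply Rmin_pos; auto. }
  intros u Hu Hut. pose proof (Rmin_l d1 (Rmin d2 d3)). pose proof (Rmin_r d1 (Rmin d2 d3)).
  pose proof (Rmin_l d2 d3). pose proof (Rmin_r d2 d3).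
  apply dist3_lt; simpl; [apply P1|apply P2|apply P3]; auto; lra.
Qed.

Lemma contw_inv f a b : incr_on f a b -> continuity f -> a <= b ->
  contw (fun L => f a <= L <= f b) (inv_on f a b).
Proof.
  intros Hi Hc Hab L0 HL0 e He. destruct (inv_cont f a b Hi Hc Hab L0 HL0 e He) as [dl [Hdl P]].
  exists dl. split; auto.
Qed.

Lemma cont_lin (a : R) : continuity (fun t => a * t).
Proof.
  intro x. apply derivable_continuous_pt. exists a. apply dlim_lin.
Qed.

Lemma cont_exp : continuity exp.
Proof. apply derivable_continuous. apply derivable_exp. Qed.

Lemma cont_comp_R f g : continuity f -> continuity g -> continuity (fun x => g (f x)).
Proof. intros Hf Hg x. apply (continuity_pt_comp f g x (Hf x) (Hg (f x))). Qed.

Section Graph.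
Variables (d g k : R) (f l : R -> R) (a b : R).
Hypotheses (hg : 0 < g) (hk : 0 < k < 1).
Hypotheses (Hfc : continuity f) (Hfi : incr_on f a b) (Hab : a <= b) (Hb0 : b <= 0).
Hypotheses (Hlc : continuity l) (Hlr : forall s, f a <= l s <= f b).
Hypothesis (Hlsin : forall s s', sin s = sin s' -> l s = l s').
Hypothesis (Hlink : forall x s, a <= x <= b -> (f x = l s <-> lev g k s = Gf d x)).

Definition Xg (s : R) : R := inv_on f a b (l s).
Definition cg (t : R) : Rpt := emb (exp (Xg (2 * PI * t))) (2 * PI * t).

Lemma Xg_spec s : a <= Xg s <= b /\ f (Xg s) = l s.
Proof. apply inv_spec; auto. Qed.

Lemma cg_cont : cont01 cg.
Proof.
  unfold cg, emb. apply cont01_of.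
  - apply (contw_comp I01 (fun L => f a <= L <= f b) (fun t => l (2 * PI * t))
            (fun L => exp (inv_on f a b L))).
    + apply contw_of_cont. apply cont_comp_R; auto. apply cont_lin.
    + intros. apply Hlr.
    + apply (contw_comp _ (fun _ => True) (inv_on f a b) exp).
      * apply contw_inv; auto.
      * auto.
      * apply contw_of_cont. apply cont_exp.
  - apply contw_of_cont. apply cont_comp_R; [apply cont_lin|apply continuity_cos].
  - apply contw_of_cont. apply cont_comp_R; [apply cont_lin|apply continuity_sin].
Qed.

Lemma cg_closed : cg 0 = cg 1.
Proof.
  unfold cg, Xg. rewrite Rmult_0_r, Rmult_1_r.
  rewrite (Hlsin 0 (2*PI)) by (rewrite sin_0, sin_2PI; reflexivity).
  unfold emb. rewrite cos_0, sin_0, cos_2PI, sin_2PI. reflexivity.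
Qed.

Lemma cg_inj t u : 0 <= t <= 1 -> 0 <= u <= 1 -> cg t = cg u ->
  t = u \/ (t = 0 /\ u = 1) \/ (t = 1 /\ u = 0).
Proof.
  intros Ht Hu E. unfold cg, emb in E. injection E. intros Es Ec _.
  pose proof PI_RGT_0.
  assert (B1 : 0 <= 2*PI*t <= 2*PI) by nra. assert (B2 : 0 <= 2*PI*u <= 2*PI) by nra.
  destruct (angle_eq_02pi (2*PI*t) (2*PI*u) Ec Es B1 B2) as [A|[[A1 A2]|[A1 A2]]].
  - left. apply (Rmult_eq_reg_l (2*PI)); lra.
  - right; left. split; apply (Rmult_eq_reg_l (2*PI)); lra.
  - right; right. split; apply (Rmult_eq_reg_l (2*PI)); lra.
Qed.

Lemma cg_in_Z t : Zset d g k (cg t).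
Proof.
  apply Zset_iff. exists (exp (Xg (2*PI*t))), (2*PI*t). split; [|split; auto].
  - destruct (Xg_spec (2*PI*t)). split; [apply exp_pos|].
    rewrite <- exp_0. destruct (Req_dec (Xg (2*PI*t)) 0) as [E|E]; [rewrite E; lra|].
    left. apply exp_increasing. lra.
  - rewrite ln_exp. destruct (Xg_spec (2*PI*t)) as [H1 H2].
    apply (Hlink (Xg (2*PI*t)) (2*PI*t) H1). auto.
Qed.

Lemma cg_angle t : Yc (cg t) = cos (2*PI*t) /\ Zc (cg t) = sin (2*PI*t).
Proof. split; reflexivity. Qed.

Lemma cg_tcoord t : a <= ln (tcoord (cg t)) <= b.
Proof. unfold cg, emb, tcoord. simpl. rewrite ln_exp. apply Xg_spec. Qed.

Lemma cg_onto tau s : 0 < tau <= 1 -> lev g k s = Gf d (ln tau) -> a <= ln tau <= b ->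
  exists t, 0 <= t <= 1 /\ emb tau s = cg t.
Proof.
  intros Ht Hs Hx.
  assert (Hu : cos s ^2 + sin s ^2 = 1) by (pose proof (sin2_cos2 s); unfold Rsqr in *; lra).
  destruct (circ_param (cos s) (sin s) Hu) as [s' [Hs' [E1 E2]]].
  pose proof PI_RGT_0.
  exists (s' / (2 * PI)). split.
  { assert (0 < / (2*PI)) by (apply Rinv_0_lt_compat; lra).
    unfold Rdiv. split; [nra|].
    apply (Rmult_le_reg_l (2*PI)); [lra|].
    replace (2 * PI * (s' * / (2 * PI))) with s' by (field; lra). lra. }
  unfold cg. replace (2 * PI * (s' / (2 * PI))) with s' by (field; lra).
  assert (Hl : f (ln tau) = l s').
  { apply Hlink; auto. unfold lev in *. rewrite <- E2. auto. }
  unfold Xg. rewrite (inv_unique f a b (l s') (ln tau)); auto.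
  rewrite exp_ln by lra. unfold emb. rewrite <- E1, <- E2. reflexivity.
Qed.

End Graph.

Lemma contw_pw (f1 f2 : R -> R) : contw I01 f1 -> contw I01 f2 -> f1 (1/2) = f2 (1/2) ->
  contw I01 (fun t => if Rle_dec t (1/2) then f1 t else f2 t).
Proof.
  intros H1 H2 E t0 Ht0 e He.
  destruct (H1 t0 Ht0 e He) as [d1 [Hd1 P1]].
  destruct (H2 t0 Ht0 e He) as [d2 [Hd2 P2]].
  destruct (Rtotal_order t0 (1/2)) as [L|[L|L]].
  - exists (Rmin d1 (1/2 - t0)). split; [apply Rmin_pos; lra|].
    intros u Hu Hut. pose proof (Rmin_l d1 (1/2 - t0)). pose proof (Rmin_r d1 (1/2 - t0)).
    apply Rabs_def2 in Hut as Hut'.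
    destruct (Rle_dec u (1/2)); [|lra]. destruct (Rle_dec t0 (1/2)); [|lra].
    apply P1; auto; lra.
  - subst t0. exists (Rmin d1 d2). split; [apply Rmin_pos; lra|].
    intros u Hu Hut. pose proof (Rmin_l d1 d2). pose proof (Rmin_r d1 d2).
    destruct (Rle_dec (1/2) (1/2)); [|lra].
    destruct (Rle_dec u (1/2)).
    + apply P1; auto; lra.
    + rewrite E. apply P2; auto; lra.
  - exists (Rmin d2 (t0 - 1/2)). split; [apply Rmin_pos; lra|].
    intros u Hu Hut. pose proof (Rmin_l d2 (t0 - 1/2)). pose proof (Rmin_r d2 (t0 - 1/2)).
    apply Rabs_def2 in Hut as Hut'.
    destruct (Rle_dec u (1/2)); [lra|]. destruct (Rle_dec t0 (1/2)); [lra|].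
    apply P2; auto; lra.
Qed.

Definition cont2w (F : R -> R -> R) : Prop :=
  forall t u, 0 <= t <= 1 -> 0 <= u <= 1 -> forall e, 0 < e ->
    exists dl, 0 < dl /\ forall t' u', 0 <= t' <= 1 -> 0 <= u' <= 1 ->
      Rabs (t' - t) < dl -> Rabs (u' - u) < dl -> Rabs (F t' u' - F t u) < e.

Lemma cont2_interp (al : R -> R) (be : R) (Fo : R -> R) :
  contw I01 al -> continuity Fo -> cont2w (fun t u => Fo ((1 - u) * al t + u * be)).
Proof.
  intros Ha HF t u Ht Hu e He.
  set (y0 := (1 - u) * al t + u * be).
  destruct (cpt_eps Fo y0 (HF y0) e He) as [eta [Heta P]].
  destruct (Ha t Ht (eta/2) ltac:(lra)) as [d1 [Hd1 P1]].
  set (K := Rabs (al t - be) + 1).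
  assert (HK : 0 < K) by (unfold K; pose proof (Rabs_pos (al t - be)); lra).
  exists (Rmin d1 (eta / (2 * K))). split.
  { apply Rmin_pos; auto. apply Rdiv_lt_0_compat; lra. }
  intros t' u' Ht' Hu' Htt Huu.
  pose proof (Rmin_l d1 (eta / (2 * K))). pose proof (Rmin_r d1 (eta / (2 * K))).
  apply P.
  replace ((1 - u') * al t' + u' * be - y0) with ((1 - u') * (al t' - al t) + (u - u') * (al t - be))
    by (unfold y0; ring).
  eapply Rle_lt_trans; [apply Rabs_triang|]. rewrite !Rabs_mult.
  assert (A1 : Rabs (1 - u') <= 1) by (rewrite Rabs_right; lra).
  assert (A2 : Rabs (al t' - al t) < eta / 2) by (apply P1; auto; lra).
  assert (A3 : Rabs (u - u') < eta / (2 * K)) by (rewrite Rabs_minus_sym; lra).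
  assert (A4 : Rabs (al t - be) <= K) by (unfold K; lra).
  assert (A5 : Rabs (u - u') * Rabs (al t - be) <= eta / (2*K) * K).
  { apply Rmult_le_compat; try apply Rabs_pos; lra. }
  assert (eta / (2*K) * K = eta/2) by (field; lra).
  assert (Rabs (1 - u') * Rabs (al t' - al t) < eta/2 \/ Rabs (1 - u') * Rabs (al t' - al t) <= eta/2) by
    (right; pose proof (Rabs_pos (1-u')); pose proof (Rabs_pos (al t' - al t)); nra).
  destruct H2; pose proof (Rabs_pos (u - u')); nra.
Qed.

Lemma contractible_generic (x sx : R -> R) (xs ss : R) :
  contw I01 x -> contw I01 sx -> (forall t, 0 <= t <= 1 -> x t <= 0) -> xs <= 0 ->
  x 0 = x 1 -> sx 0 = sx 1 ->
  contractible_in_C (fun t => emb (exp (x t)) (sx t)).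
Proof.
  intros Hx Hs Hneg Hxs E0 E1.
  exists (fun t u => emb (exp ((1 - u) * x t + u * xs)) ((1 - u) * sx t + u * ss)).
  split; [|split; [|split; [|split]]].
  - intros t u Ht Hu e He.
    destruct (cont2_interp x xs exp Hx cont_exp t u Ht Hu e He) as [d1 [Hd1 P1]].
    destruct (cont2_interp sx ss cos Hs continuity_cos t u Ht Hu e He) as [d2 [Hd2 P2]].
    destruct (cont2_interp sx ss sin Hs continuity_sin t u Ht Hu e He) as [d3 [Hd3 P3]].
    exists (Rmin d1 (Rmin d2 d3)). split; [apply Rmin_pos; auto; apply Rmin_pos; auto|].
    intros t' u' Ht' Hu' Htt Huu.
    pose proof (Rmin_l d1 (Rmin d2 d3)). pose proof (Rmin_r d1 (Rmin d2 d3)).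
    pose proof (Rmin_l d2 d3). pose proof (Rmin_r d2 d3).
    unfold emb. apply dist3_lt; simpl; [apply P1|apply P2|apply P3]; auto; lra.
  - intros t u Ht Hu. unfold inC. exists (exp ((1 - u) * x t + u * xs)), ((1 - u) * sx t + u * ss).
    split; auto. split; [apply exp_pos|].
    pose proof (Hneg t Ht).
    assert ((1 - u) * x t + u * xs <= 0) by nra.
    assert (exp ((1 - u) * x t + u * xs) <= exp 0).
    { destruct (Req_dec ((1 - u) * x t + u * xs) 0) as [E|E]; [rewrite E; lra|].
      left; apply exp_increasing; lra. }
    rewrite exp_0 in H1. exact H1.
  - intros t Ht. simpl. f_equal; [f_equal; f_equal|]; ring.
  - exists (emb (exp xs) ss). intros t Ht. unfold emb. repeat f_equal; ring.
  - intros u Hu. rewrite E0, E1. reflexivity.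
Qed.

Lemma G_small' d c x : 1 < d -> d < Phi -> 0 < c -> x <= ln c / pdelta d -> Gf d x < c.
Proof.
  intros. pose proof (p_pos d H H0). unfold Gf.
  assert (exp (pdelta d * x) <= c).
  { replace c with (exp (pdelta d * (ln c / pdelta d))) by (field_simplify (pdelta d * (ln c / pdelta d)); [apply exp_ln; lra| lra]).
    destruct (Req_dec x (ln c / pdelta d)) as [E|E]; [rewrite E; lra|].
    left. apply exp_increasing. apply Rmult_lt_compat_l; lra. }
  pose proof (exp_pos (d * x)). lra.
Qed.

Lemma sin_3pi2_plus th : sin (3 * PI / 2 + th) = - cos th.
Proof. rewrite sin_plus, c3, s3. ring. Qed.
Lemma cos_3pi2_plus th : cos (3 * PI / 2 + th) = sin th.
Proof. rewrite cos_plus, c3, s3. ring. Qed.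

Lemma cos_abs th : cos th = cos (Rabs th).
Proof.
  destruct (Rle_dec 0 th). rewrite Rabs_pos_eq; auto.
  rewrite Rabs_left by lra. rewrite cos_neg. auto.
Qed.

Lemma abs_le x a : Rabs x <= a -> -a <= x <= a.
Proof. intros. destruct (Rle_dec 0 x); [rewrite Rabs_pos_eq in H|rewrite Rabs_left in H]; lra. Qed.
Lemma abs_le' x a : -a <= x <= a -> Rabs x <= a.
Proof. intros. destruct (Rle_dec 0 x); [rewrite Rabs_pos_eq|rewrite Rabs_left]; lra. Qed.

Section XCurve.
Variables (d g k : R).
Hypotheses (hd : 1 < d) (hdP : d < Phi) (hg : 0 < g) (hk : 0 < k < 1).
Let M := Gf d (xc d).
Hypotheses (hM1 : g * (1 - k) < M) (hM2 : M < g * (1 + k)).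

Definition aL : R := Rmin (xc d - 1) (ln (g * (1 - k)) / pdelta d).
Let w := (M / g - 1) / k.
Definition sig : R := acos (- w).
Definition slo : R := 3 * PI / 2 - sig.
Definition shi : R := 3 * PI / 2 + sig.

Lemma aL_prop : aL < xc d /\ Gf d aL < g * (1 - k).
Proof.
  split.
  - unfold aL. pose proof (Rmin_l (xc d - 1) (ln (g * (1 - k)) / pdelta d)). lra.
  - apply G_small'; auto; [nra|]. apply Rmin_r.
Qed.

Lemma w_bound : -1 < w < 1.
Proof.
  unfold w. split.
  - apply (Rmult_lt_reg_l k); [lra|]. apply (Rmult_lt_reg_l g); [lra|].
    replace (g * (k * ((M / g - 1) / k))) with (M - g) by (field; lra). nra.
  - apply (Rmult_lt_reg_l k); [lra|]. apply (Rmult_lt_reg_l g); [lra|].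
    replace (g * (k * ((M / g - 1) / k))) with (M - g) by (field; lra). nra.
Qed.

Lemma M_w : M = g * (1 + k * w).
Proof. unfold w. field. lra. Qed.

Lemma sig_bound : 0 < sig < PI.
Proof. unfold sig. apply acos_bound_lt. pose proof w_bound. lra. Qed.

Lemma cos_sig : cos sig = - w.
Proof. unfold sig. apply cos_acos. pose proof w_bound. lra. Qed.

Lemma lev_M s : lev g k s = M <-> sin s = w.
Proof. rewrite M_w. apply lev_sin; auto. Qed.

Lemma arc_sin th : Rabs th <= sig -> sin (3 * PI / 2 + th) <= w.
Proof.
  intros H. rewrite sin_3pi2_plus, cos_abs.
  pose proof sig_bound. pose proof (Rabs_pos th).
  destruct (Req_dec (Rabs th) sig) as [E|E].
  - rewrite E, cos_sig. lra.
  - pose proof (cos_decreasing_1 (Rabs th) sig ltac:(lra) ltac:(lra) ltac:(lra) ltac:(lra) ltac:(lra)).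
    rewrite cos_sig in H2. lra.
Qed.

Lemma arc_eq th : Rabs th <= sig -> sin (3 * PI / 2 + th) = w -> Rabs th = sig.
Proof.
  intros H E. rewrite sin_3pi2_plus, cos_abs in E.
  pose proof sig_bound. pose proof (Rabs_pos th).
  apply cos_inj; try lra. rewrite cos_sig. lra.
Qed.

Lemma arc_rep s : sin s <= w -> exists s', slo <= s' <= shi /\ cos s' = cos s /\ sin s' = sin s.
Proof.
  intros Hs. pose proof PI_RGT_0. pose proof sig_bound.
  assert (Hu : cos s ^2 + sin s ^2 = 1) by (pose proof (sin2_cos2 s); unfold Rsqr in *; lra).
  destruct (circ_param (cos s) (sin s) Hu) as [s0 [Hs0 [E1 E2]]].
  set (s1 := if Rlt_dec (s0 - 3*PI/2) (-PI) then s0 + 2*PI else s0).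
  assert (Hs1 : cos s1 = cos s /\ sin s1 = sin s /\ -PI <= s1 - 3*PI/2 <= PI).
  { unfold s1. destruct (Rlt_dec (s0 - 3*PI/2) (-PI)).
    - rewrite cos_plus, sin_plus, cos_2PI, sin_2PI. split; [|split]; try lra.
    - split; [|split]; lra. }
  destruct Hs1 as [F1 [F2 F3]].
  exists s1. split; [|auto].
  set (th := s1 - 3*PI/2).
  assert (Ht : s1 = 3*PI/2 + th) by (unfold th; ring).
  assert (cos (Rabs th) >= cos sig).
  { rewrite cos_sig, <- cos_abs. rewrite Ht, sin_3pi2_plus in F2. lra. }
  assert (Rabs th <= sig).
  { destruct (Rle_dec (Rabs th) sig); auto.
    pose proof (cos_decreasing_1 sig (Rabs th) ltac:(lra) ltac:(lra) ltac:(apply Rabs_pos)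
       ltac:(unfold th; apply abs_le'; lra) ltac:(lra)). lra. }
  apply abs_le in H2. unfold slo, shi. lra.
Qed.

Definition sx (t : R) : R := shi - Rabs (1 - 2*t) * (2 * sig).

Lemma abs12 t : 0 <= t <= 1 -> 0 <= Rabs (1 - 2*t) <= 1.
Proof. intros. split; [apply Rabs_pos|apply abs_le'; lra]. Qed.

Lemma sx_theta t : 0 <= t <= 1 -> Rabs (sx t - 3*PI/2) <= sig.
Proof.
  intros Ht. pose proof (abs12 t Ht). pose proof sig_bound. apply abs_le'. unfold sx, shi. nra.
Qed.

Lemma sx_range t : 0 <= t <= 1 -> slo <= sx t <= shi.
Proof.
  intros Ht. pose proof (abs_le _ _ (sx_theta t Ht)). unfold slo, shi. lra.
Qed.

Lemma lev_sx t : 0 <= t <= 1 -> g * (1 - k) <= lev g k (sx t) <= M.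
Proof.
  intros Ht. pose proof (lev_range g k (sx t) hg ltac:(lra)). split; [lra|].
  rewrite M_w. unfold lev.
  replace (sx t) with (3*PI/2 + (sx t - 3*PI/2)) by ring.
  pose proof (arc_sin _ (sx_theta t Ht)).
  assert (0 <= g * k) by nra. nra.
Qed.

Lemma sx_cont : contw I01 sx.
Proof.
  intros t Ht e He. pose proof sig_bound.
  exists (e / (4 * sig + 1)). split; [apply Rdiv_lt_0_compat; lra|].
  intros u Hu Hut. unfold sx.
  replace (shi - Rabs (1 - 2 * u) * (2 * sig) - (shi - Rabs (1 - 2 * t) * (2 * sig)))
    with ((2 * sig) * (Rabs (1 - 2 * t) - Rabs (1 - 2 * u))) by ring.
  rewrite Rabs_mult, (Rabs_pos_eq (2*sig)) by lra.
  pose proof (Rabs_triang_inv2 (1 - 2*t) (1 - 2*u)).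
  replace (1 - 2 * t - (1 - 2 * u)) with (2 * (u - t)) in H0 by ring.
  rewrite Rabs_mult, (Rabs_pos_eq 2) in H0 by lra.
  assert (e / (4 * sig + 1) * (4 * sig + 1) = e) by (field; lra).
  pose proof (Rabs_pos (Rabs (1 - 2 * t) - Rabs (1 - 2 * u))).
  assert (2 * sig * Rabs (Rabs (1 - 2 * t) - Rabs (1 - 2 * u)) <= 4 * sig * Rabs (u - t)) by nra.
  assert (4 * sig * Rabs (u - t) <= (4 * sig + 1) * Rabs (u - t)) by (pose proof (Rabs_pos (u-t)); nra).
  assert ((4 * sig + 1) * Rabs (u - t) < (4 * sig + 1) * (e / (4 * sig + 1))) by (apply Rmult_lt_compat_l; lra).
  lra.
Qed.

Definition fR (x : R) : R := - Gf d x.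

Lemma incr_L : incr_on (Gf d) aL (xc d).
Proof. intros x y Hx Hxy Hy. apply G_incr; auto. Qed.

Lemma incr_R : incr_on fR (xc d) 0.
Proof. intros x y Hx Hxy Hy. unfold fR. pose proof (G_decr d x y hd hdP Hx Hxy). lra. Qed.

Lemma fR_cont : continuity fR.
Proof. apply (continuity_opp (Gf d)). apply G_cont. Qed.

Lemma xc_neg' : xc d < 0.
Proof. apply xc_neg; auto. Qed.

Definition xL (t : R) : R := inv_on (Gf d) aL (xc d) (lev g k (sx t)).
Definition xR (t : R) : R := inv_on fR (xc d) 0 (- lev g k (sx t)).

Lemma rangeL t : 0 <= t <= 1 -> Gf d aL <= lev g k (sx t) <= Gf d (xc d).
Proof. intros. pose proof (lev_sx t H). pose proof aL_prop. fold M. lra. Qed.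

Lemma rangeR t : 0 <= t <= 1 -> fR (xc d) <= - lev g k (sx t) <= fR 0.
Proof.
  intros. pose proof (lev_sx t H). unfold fR. rewrite G_0. fold M.
  assert (0 < g * (1 - k)) by nra. lra.
Qed.

Lemma xL_spec t : 0 <= t <= 1 -> aL <= xL t <= xc d /\ Gf d (xL t) = lev g k (sx t).
Proof.
  intros. apply inv_spec; [apply G_cont| pose proof aL_prop; lra| apply rangeL; auto].
Qed.

Lemma xR_spec t : 0 <= t <= 1 -> xc d <= xR t <= 0 /\ fR (xR t) = - lev g k (sx t).
Proof.
  intros. apply inv_spec; [apply fR_cont| pose proof xc_neg'; lra| apply rangeR; auto].
Qed.

Lemma xL_cont : contw I01 xL.
Proof.
  apply (contw_comp I01 (fun L => Gf d aL <= L <= Gf d (xc d)) (fun t => lev g k (sx t))).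
  - apply (contw_comp I01 (fun _ => True) sx (lev g k)); auto using sx_cont.
    apply contw_of_cont. intro x. unfold lev.
    apply continuity_pt_mult; [apply continuity_pt_const; intros ? ?; auto|].
    apply continuity_pt_plus; [apply continuity_pt_const; intros ? ?; auto|].
    apply continuity_pt_mult; [apply continuity_pt_const; intros ? ?; auto|apply continuity_sin].
  - intros. apply rangeL; auto.
  - apply contw_inv; [apply incr_L|apply G_cont|pose proof aL_prop; lra].
Qed.

Lemma lev_cont : continuity (lev g k).
Proof.
  intro x. unfold lev.
  apply continuity_pt_mult; [apply continuity_pt_const; intros ? ?; auto|].
  apply continuity_pt_plus; [apply continuity_pt_const; intros ? ?; auto|].
  apply continuity_pt_mult; [apply continuity_pt_const; intros ? ?; auto|apply continuity_sin].
Qed.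

Lemma xR_cont : contw I01 xR.
Proof.
  apply (contw_comp I01 (fun L => fR (xc d) <= L <= fR 0) (fun t => - lev g k (sx t))).
  - apply (contw_comp I01 (fun _ => True) sx (fun s => - lev g k s)); auto using sx_cont.
    apply contw_of_cont. apply (continuity_opp (lev g k)). apply lev_cont.
  - intros. apply rangeR; auto.
  - apply contw_inv; [apply incr_R|apply fR_cont|pose proof xc_neg'; lra].
Qed.

Lemma sin_shi : sin shi = w.
Proof. unfold shi. rewrite sin_3pi2_plus, cos_sig. ring. Qed.
Lemma sin_slo : sin slo = w.
Proof. unfold slo. replace (3 * PI / 2 - sig) with (3 * PI / 2 + - sig) by ring.
  rewrite sin_3pi2_plus, cos_neg, cos_sig. ring. Qed.

Lemma sx_half : sx (1/2) = shi.
Proof. unfold sx. replace (1 - 2 * (1/2)) with 0 by field. rewrite Rabs_R0. ring. Qed.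
Lemma sx_0 : sx 0 = slo.
Proof. unfold sx, slo, shi. replace (1 - 2 * 0) with 1 by ring. rewrite Rabs_R1. ring. Qed.
Lemma sx_1 : sx 1 = slo.
Proof. unfold sx, slo, shi. replace (1 - 2 * 1) with (-1) by ring. rewrite Rabs_left by lra. ring. Qed.

Lemma lev_M_at s : sin s = w -> lev g k s = M.
Proof. intros. apply lev_M. auto. Qed.

Lemma xL_at t : 0 <= t <= 1 -> sin (sx t) = w -> xL t = xc d.
Proof.
  intros Ht E. unfold xL. rewrite (lev_M_at _ E).
  apply inv_unique; [apply incr_L|apply G_cont|pose proof aL_prop; lra|pose proof aL_prop; lra|reflexivity].
Qed.

Lemma xR_at t : 0 <= t <= 1 -> sin (sx t) = w -> xR t = xc d.
Proof.
  intros Ht E. unfold xR. rewrite (lev_M_at _ E).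
  apply inv_unique; [apply incr_R|apply fR_cont|pose proof xc_neg'; lra|pose proof xc_neg'; lra|reflexivity].
Qed.

Definition xX (t : R) : R := if Rle_dec t (1/2) then xL t else xR t.
Definition cX (t : R) : Rpt := emb (exp (xX t)) (sx t).

Lemma xX_cont : contw I01 xX.
Proof.
  apply contw_pw; [apply xL_cont|apply xR_cont|].
  rewrite xL_at, xR_at; try lra; rewrite sx_half; apply sin_shi.
Qed.

Lemma xX_0 : xX 0 = xc d.
Proof. unfold xX. destruct (Rle_dec 0 (1/2)); [|lra]. apply xL_at; [lra|]. rewrite sx_0. apply sin_slo. Qed.
Lemma xX_1 : xX 1 = xc d.
Proof. unfold xX. destruct (Rle_dec 1 (1/2)); [lra|]. apply xR_at; [lra|]. rewrite sx_1. apply sin_slo. Qed.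

Lemma xX_neg t : 0 <= t <= 1 -> xX t <= 0.
Proof.
  intros Ht. pose proof xc_neg'. unfold xX. destruct (Rle_dec t (1/2)).
  - pose proof (xL_spec t Ht). lra.
  - pose proof (xR_spec t Ht). lra.
Qed.

Lemma xX_G t : 0 <= t <= 1 -> Gf d (xX t) = lev g k (sx t).
Proof.
  intros Ht. unfold xX. destruct (Rle_dec t (1/2)).
  - apply xL_spec; auto.
  - pose proof (xR_spec t Ht) as [_ E]. unfold fR in E. lra.
Qed.

Lemma cX_contr : contractible_in_C cX.
Proof.
  apply (contractible_generic xX sx (xc d) shi xX_cont sx_cont xX_neg).
  - left; apply xc_neg'.
  - rewrite xX_0, xX_1. reflexivity.
  - rewrite sx_0, sx_1. reflexivity.
Qed.

Lemma cX_cont : cont01 cX.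
Proof.
  unfold cX, emb. apply cont01_of.
  - apply (contw_comp I01 (fun _ => True) xX exp); auto using xX_cont.
    apply contw_of_cont. apply cont_exp.
  - apply (contw_comp I01 (fun _ => True) sx cos); auto using sx_cont.
    apply contw_of_cont. apply continuity_cos.
  - apply (contw_comp I01 (fun _ => True) sx sin); auto using sx_cont.
    apply contw_of_cont. apply continuity_sin.
Qed.

Lemma cX_closed : cX 0 = cX 1.
Proof. unfold cX. rewrite xX_0, xX_1, sx_0, sx_1. reflexivity. Qed.

Lemma cX_inZ t : 0 <= t <= 1 -> Zset d g k (cX t).
Proof.
  intros Ht. apply Zset_iff. exists (exp (xX t)), (sx t). split; [|split; auto].
  - split; [apply exp_pos|]. pose proof (xX_neg t Ht).
    assert (exp (xX t) <= exp 0).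
    { destruct (Req_dec (xX t) 0) as [E|E]; [rewrite E; lra|]. left; apply exp_increasing; lra. }
    rewrite exp_0 in H0. auto.
  - rewrite ln_exp. symmetry. apply xX_G; auto.
Qed.

Lemma cross_case t u : 0 <= t < 1/2 -> 1/2 < u <= 1 -> u = 1 - t -> xX t = xX u ->
  t = 0 /\ u = 1.
Proof.
  intros Ht Hu Etu E. pose proof sig_bound.
  unfold xX in E. destruct (Rle_dec t (1/2)); [|lra]. destruct (Rle_dec u (1/2)); [lra|].
  pose proof (xL_spec t ltac:(lra)) as [A1 A2]. pose proof (xR_spec u ltac:(lra)) as [B1 B2].
  assert (xL t = xc d) by lra.
  rewrite H0 in A2. fold M in A2. symmetry in A2. apply lev_M in A2.
  replace (sx t) with (3*PI/2 + (sx t - 3*PI/2)) in A2 by ring.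
  pose proof (arc_eq _ (sx_theta t ltac:(lra)) A2) as E2.
  unfold sx, shi in E2. rewrite (Rabs_pos_eq (1 - 2*t)) in E2 by lra.
  replace (3 * PI / 2 + sig - (1 - 2 * t) * (2 * sig) - 3 * PI / 2) with (sig * (4*t - 1)) in E2 by ring.
  rewrite Rabs_mult, Rabs_pos_eq in E2 by lra.
  assert (Rabs (4*t - 1) = 1) by (apply (Rmult_eq_reg_l sig); lra).
  destruct (Rle_dec 0 (4*t-1)); [rewrite Rabs_pos_eq in H1 by lra|rewrite Rabs_left in H1 by lra]; lra.
Qed.

Lemma cX_inj t u : 0 <= t <= 1 -> 0 <= u <= 1 -> cX t = cX u ->
  t = u \/ (t = 0 /\ u = 1) \/ (t = 1 /\ u = 0).
Proof.
  intros Ht Hu E. unfold cX, emb in E. injection E. intros Es Ec Ex.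
  pose proof sig_bound. pose proof PI_RGT_0.
  assert (Exx : xX t = xX u) by (rewrite <- (ln_exp (xX t)), <- (ln_exp (xX u)), Ex; reflexivity).
  assert (Esx : sx t = sx u).
  { apply angle_eq_small; auto. pose proof (sx_range t Ht). pose proof (sx_range u Hu).
    unfold slo, shi in *. apply Rabs_def1; lra. }
  unfold sx in Esx.
  assert (Ea : Rabs (1 - 2*t) = Rabs (1 - 2*u)) by (apply (Rmult_eq_reg_r (2*sig)); lra).
  destruct (Rle_dec 0 (1 - 2*t)); destruct (Rle_dec 0 (1 - 2*u));
    [rewrite (Rabs_pos_eq (1-2*t)), (Rabs_pos_eq (1-2*u)) in Ea by lra
    |rewrite (Rabs_pos_eq (1-2*t)), (Rabs_left (1-2*u)) in Ea by lra
    |rewrite (Rabs_left (1-2*t)), (Rabs_pos_eq (1-2*u)) in Ea by lra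
    |rewrite (Rabs_left (1-2*t)), (Rabs_left (1-2*u)) in Ea by lra].
  - left; lra.
  - destruct (Req_dec t (1/2)); [left; lra|].
    right; left. apply cross_case; auto; lra.
  - destruct (Req_dec u (1/2)); [left; lra|].
    right; right. destruct (cross_case u t) as [A B]; auto; lra.
  - left; lra.
Qed.

Lemma G_le_M x : Gf d x <= M.
Proof.
  unfold M. destruct (Rtotal_order x (xc d)) as [L|[L|L]].
  - left. apply G_incr; auto. lra.
  - subst. lra.
  - left. apply G_decr; auto. lra.
Qed.

Lemma cX_onto tau s : 0 < tau <= 1 -> lev g k s = Gf d (ln tau) ->
  exists t, 0 <= t <= 1 /\ emb tau s = cX t.
Proof.
  intros Ht Hs. pose proof sig_bound. pose proof PI_RGT_0.
  assert (Hsw : sin s <= w).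
  { pose proof (G_le_M (ln tau)). rewrite <- Hs, M_w in H1. unfold lev in H1.
    assert (g * k * (sin s - w) <= 0) by nra.
    assert (0 < g * k) by nra.
    destruct (Rle_dec (sin s) w); auto. exfalso. assert (0 < g * k * (sin s - w)) by (apply Rmult_lt_0_compat; lra). lra. }
  destruct (arc_rep s Hsw) as [s' [Hs' [E1 E2]]].
  assert (Hl : lev g k s' = lev g k s) by (unfold lev; rewrite E2; reflexivity).
  set (x := ln tau).
  assert (Hx0 : x <= 0) by (unfold x; rewrite <- ln_1; destruct (Req_dec tau 1) as [E|E];
    [rewrite E; lra| left; apply ln_increasing; lra]).
  assert (Etau : emb tau s = emb (exp x) s') by (unfold x; rewrite exp_ln by lra; unfold emb; rewrite E1, E2; reflexivity).
  rewrite Etau.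
  destruct (Rle_dec x (xc d)) as [Hxc|Hxc].
  - assert (HaL : aL <= x).
    { destruct (Rle_dec aL x); auto. exfalso.
      pose proof aL_prop. pose proof (G_incr d x aL hd hdP ltac:(lra) ltac:(lra)).
      pose proof (lev_range g k s hg ltac:(lra)). fold x in Hs. lra. }
    exists ((s' - slo) / (4 * sig)).
    assert (Ht' : 0 <= (s' - slo) / (4 * sig) <= 1/2).
    { unfold slo, shi in *. split.
      - apply Rmult_le_pos; [lra|left; apply Rinv_0_lt_compat; lra].
      - apply (Rmult_le_reg_l (4*sig)); [lra|].
        replace (4 * sig * ((s' - (3 * PI / 2 - sig)) / (4 * sig))) with (s' - (3 * PI / 2 - sig)) by (field; lra).
        lra. }
    split; [lra|].
    assert (Esx : sx ((s' - slo) / (4 * sig)) = s').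
    { unfold sx. rewrite Rabs_pos_eq by lra. unfold shi, slo. field. lra. }
    unfold cX, xX. rewrite Esx. destruct (Rle_dec ((s' - slo) / (4 * sig)) (1/2)); [|lra].
    unfold xL. rewrite Esx. rewrite (inv_unique (Gf d) aL (xc d) (lev g k s') x); auto.
    + apply incr_L.
    + apply G_cont.
    + pose proof aL_prop; lra.
    + rewrite Hl, Hs. reflexivity.
  - assert (Hne : s' < shi).
    { destruct (Rle_dec shi s'); [|lra]. exfalso. assert (s' = shi) by lra. subst s'.
      rewrite (lev_M_at _ sin_shi) in Hl. rewrite Hs in Hl.
      pose proof (G_decr d (xc d) x hd hdP ltac:(lra) ltac:(lra)). change (Gf d (xc d)) with M in H1. change (ln tau) with x in Hl. lra. }
    exists (1 - (s' - slo) / (4 * sig)).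
    assert (Ht' : 1/2 < 1 - (s' - slo) / (4 * sig) <= 1).
    { unfold slo, shi in *. split.
      - apply (Rmult_lt_reg_l (4*sig)); [lra|].
        replace (4 * sig * (1 - (s' - (3 * PI / 2 - sig)) / (4 * sig))) with (4 * sig - (s' - (3 * PI / 2 - sig))) by (field; lra).
        lra.
      - assert (0 <= (s' - (3 * PI / 2 - sig)) / (4 * sig)) by
          (apply Rmult_le_pos; [lra|left; apply Rinv_0_lt_compat; lra]). lra. }
    split; [lra|].
    assert (Esx : sx (1 - (s' - slo) / (4 * sig)) = s').
    { unfold sx. rewrite Rabs_left1.
      - unfold shi, slo. field. lra.
      - lra. }
    unfold cX, xX. rewrite Esx. destruct (Rle_dec (1 - (s' - slo) / (4 * sig)) (1/2)); [lra|].
    unfold xR. rewrite Esx. rewrite (inv_unique fR (xc d) 0 (- lev g k s') x); auto.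
    + apply incr_R.
    + apply fR_cont.
    + pose proof xc_neg'; lra.
    + lra.
    + unfold fR. rewrite Hl, Hs. reflexivity.
Qed.

Lemma cX_simple : simple_closed_param cX (Zset d g k).
Proof.
  split; [apply cX_cont|]. split; [apply cX_closed|]. split; [apply cX_inj|].
  intro p. split.
  - intros Hp. apply Zset_iff in Hp. destruct Hp as [tau [s [H1 [H2 H3]]]].
    subst p. apply cX_onto; auto.
  - intros [t [Ht E]]. subst p. apply cX_inZ; auto.
Qed.

End XCurve.

Lemma Ffun_G d tau : Ffun d tau = Gf d (ln tau).
Proof. reflexivity. Qed.

Lemma G_le_xc d x : 1 < d -> d < Phi -> Gf d x <= Gf d (xc d).
Proof.
  intros. destruct (Rtotal_order x (xc d)) as [L|[L|L]].
  - left. apply G_incr; auto. lra.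
  - subst. lra.
  - left. apply G_decr; auto. lra.
Qed.

Lemma exp_le1 x : x <= 0 -> 0 < exp x <= 1.
Proof.
  intros. split; [apply exp_pos|].
  assert (exp x <= exp 0).
  { destruct (Req_dec x 0) as [E|E]; [rewrite E; lra|]. left; apply exp_increasing; lra. }
  rewrite exp_0 in H0. auto.
Qed.

Lemma ln_le0 tau : 0 < tau <= 1 -> ln tau <= 0.
Proof.
  intros. rewrite <- ln_1. destruct (Req_dec tau 1) as [E|E]; [rewrite E; lra|].
  left; apply ln_increasing; lra.
Qed.

Lemma M_eq d M : 1 < d -> d < Phi -> is_max_F d M -> M = Gf d (xc d).
Proof.
  intros H1 H2 [[tau [Ht E]] Hle].
  apply Rle_antisym.
  - rewrite <- E, Ffun_G. apply G_le_xc; auto.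
  - pose proof (Hle (exp (xc d)) (exp_le1 (xc d) ltac:(pose proof (xc_neg d H1 H2); lra))).
    rewrite Ffun_G, ln_exp in H. auto.
Qed.

Lemma lt_exp_ln x tau : 0 < tau -> exp x < tau -> x < ln tau.
Proof. intros. rewrite <- (ln_exp x). apply ln_increasing; auto. apply exp_pos. Qed.
Lemma lt_ln_exp x tau : 0 < tau -> tau < exp x -> ln tau < x.
Proof. intros. rewrite <- (ln_exp x). apply ln_increasing; auto. Qed.

Lemma Z_G_range d g k p : 0 < g -> 0 < k < 1 -> Zset d g k p ->
  0 < tcoord p <= 1 /\ g * (1 - k) <= Gf d (ln (tcoord p)) <= g * (1 + k).
Proof.
  intros hg hk Hp. apply Zset_iff in Hp. destruct Hp as [tau [s [H1 [H2 H3]]]].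
  subst p. unfold tcoord, emb. simpl. split; auto. rewrite <- H2. apply lev_range; lra.
Qed.

Lemma super_gen d g k tau0 s0 e q : 0 < tau0 <= 1 -> lev g k s0 = Gf d (ln tau0) -> cos s0 = 0 ->
  0 < e -> (forall tau, tau0 < tau < tau0 + e -> has_exactly_two (slice (Zset d g k) tau)) ->
  is_singleton (slice (Zset d g k) tau0) q ->
  (forall tau, tau0 - e < tau < tau0 -> is_empty (slice (Zset d g k) tau)) ->
  supercritical d g k tau0 s0.
Proof.
  intros Ht Hl Hc He H2 H1 H0. split.
  - split; auto. split; [apply gfun_zero_iff; lra|]. apply fold_deriv; auto.
  - exists (fun _ => True). split; [apply open3_full|]. split; [exact I|].
    exists e. split; auto. split; [|split].
    + intros. apply two_full. auto.
    + eapply one_full. eauto.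
    + intros. apply empty_full. auto.
Qed.

Lemma sub_gen d g k tau0 s0 e q : 0 < tau0 <= 1 -> lev g k s0 = Gf d (ln tau0) -> cos s0 = 0 ->
  0 < e -> (forall tau, tau0 - e < tau < tau0 -> has_exactly_two (slice (Zset d g k) tau)) ->
  is_singleton (slice (Zset d g k) tau0) q ->
  (forall tau, tau0 < tau < tau0 + e -> is_empty (slice (Zset d g k) tau)) ->
  subcritical d g k tau0 s0.
Proof.
  intros Ht Hl Hc He H2 H1 H0. split.
  - split; auto. split; [apply gfun_zero_iff; lra|]. apply fold_deriv; auto.
  - exists (fun _ => True). split; [apply open3_full|]. split; [exact I|].
    exists e. split; auto. split; [|split].
    + intros. apply two_full. auto.
    + eapply one_full. eauto.
    + intros. apply empty_full. auto.
Qed.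

Lemma lev_3pi2 g k : lev g k (3 * PI / 2) = g * (1 - k).
Proof. unfold lev. rewrite s3. ring. Qed.
Lemma lev_pi2 g k : lev g k (PI / 2) = g * (1 + k).
Proof. unfold lev. rewrite sin_PI2. ring. Qed.

Lemma partW k g d : 0 < k < 1 -> 0 < g -> 1 < d ->
  forall M, d < Phi -> is_max_F d M -> g > M / (1 - k) -> is_empty (Zset d g k).
Proof.
  intros hk hg hd M hP HM Hg p Hp.
  destruct (Z_G_range d g k p hg hk Hp) as [Ht [HG1 HG2]].
  destruct HM as [_ Hle]. pose proof (Hle _ Ht). rewrite Ffun_G in H.
  assert (M < g * (1 - k)).
  { apply (Rmult_lt_reg_r (/ (1 - k))); [apply Rinv_0_lt_compat; lra|].
    replace (g * (1 - k) * / (1 - k)) with g by (field; lra). unfold Rdiv in Hg. lra. }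
  lra.
Qed.

Lemma cross_pt f a b L : continuity f -> incr_on f a b -> a <= b -> f a < L < f b ->
  exists x, a < x < b /\ f x = L.
Proof.
  intros Hc Hi Hab HL. destruct (inv_spec f a b L Hc Hab ltac:(lra)) as [H1 H2].
  exists (inv_on f a b L). split; auto.
  split; destruct (Req_dec (inv_on f a b L) a) as [E|E] || idtac; try (rewrite E in H2; lra);
    destruct (Req_dec (inv_on f a b L) b) as [E'|E']; try (rewrite E' in H2; lra); lra.
Qed.

Lemma fR_G d x : fR d x = - Gf d x.
Proof. reflexivity. Qed.

Lemma ln_exp_bounds x1 x2 tau : 0 < tau -> exp x1 < tau < exp x2 -> x1 < ln tau < x2.
Proof. intros. split; [apply lt_exp_ln|apply lt_ln_exp]; lra. Qed.

Lemma not_in_bounds x1 x2 tau : 0 < tau -> x1 <= x2 -> ~ (exp x1 <= tau <= exp x2) ->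
  ln tau < x1 \/ x2 < ln tau.
Proof.
  intros Ht Hx H. destruct (Rlt_dec (ln tau) x1); [left; auto|].
  destruct (Rlt_dec x2 (ln tau)); [right; auto|].
  exfalso. apply H. rewrite <- (exp_ln tau) by auto. split.
  - destruct (Req_dec x1 (ln tau)) as [E|E]; [rewrite E; lra|]. left; apply exp_increasing; lra.
  - destruct (Req_dec x2 (ln tau)) as [E|E]; [rewrite E; lra|]. left; apply exp_increasing; lra.
Qed.

Lemma partX k g d : 0 < k < 1 -> 0 < g -> 1 < d ->
  forall M, d < Phi -> is_max_F d M -> M / (1 + k) < g < M / (1 - k) ->
     exists tau1 tau2, 0 < tau1 < tau2 /\ tau2 < 1 /\
       (forall tau, tau1 < tau < tau2 -> has_exactly_two (slice (Zset d g k) tau)) /\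
       is_singleton (slice (Zset d g k) tau1) (emb tau1 (3 * PI / 2)) /\
       is_singleton (slice (Zset d g k) tau2) (emb tau2 (3 * PI / 2)) /\
       (forall tau, ~ (tau1 <= tau <= tau2) -> is_empty (slice (Zset d g k) tau)) /\
       supercritical d g k tau1 (3 * PI / 2) /\
       subcritical d g k tau2 (3 * PI / 2) /\
       exists c, simple_closed_param c (Zset d g k) /\ contractible_in_C c.
Proof.
  intros hk hg hd M hP HM [Hg1 Hg2].
  pose proof (M_eq d M hd hP HM) as EM. subst M.
  set (M := Gf d (xc d)) in *.
  assert (hM1 : g * (1 - k) < M).
  { apply (Rmult_lt_reg_r (/ (1 - k))); [apply Rinv_0_lt_compat; lra|].
    replace (g * (1 - k) * / (1 - k)) with g by (field; lra). unfold Rdiv in Hg2. lra. }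
  assert (hM2 : M < g * (1 + k)).
  { apply (Rmult_lt_reg_r (/ (1 + k))); [apply Rinv_0_lt_compat; lra|].
    replace (g * (1 + k) * / (1 + k)) with g by (field; lra). unfold Rdiv in Hg1. lra. }
  assert (hgk : 0 < g * (1 - k)) by nra.
  destruct (aL_prop d g k hd hP hk hM1 hM2) as [HaL1 HaL2].
  pose proof (xc_neg d hd hP) as Hxc.
  destruct (cross_pt (Gf d) (aL d g k) (xc d) (g * (1 - k)) (G_cont d) (incr_L d g k hd hP) ltac:(lra) ltac:(fold M; lra))
    as [x1 [Hx1 E1]].
  destruct (cross_pt (fR d) (xc d) 0 (- (g * (1 - k))) (fR_cont d) (incr_R d hd hP) ltac:(lra)
    ltac:(rewrite !fR_G, G_0; fold M; lra)) as [x2 [Hx2 E2]].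
  rewrite fR_G in E2. assert (E2' : Gf d x2 = g * (1 - k)) by lra. clear E2.
  assert (Gle : forall x, Gf d x <= M) by (intro; apply G_le_xc; auto).
  assert (Two : forall tau, exp x1 < tau < exp x2 -> g * (1 - k) < Gf d (ln tau) < g * (1 + k)).
  { intros tau Ht. pose proof (exp_pos x1).
    pose proof (ln_exp_bounds x1 x2 tau ltac:(lra) Ht). split; [|pose proof (Gle (ln tau)); lra].
    destruct (Rle_dec (ln tau) (xc d)).
    - rewrite <- E1. apply G_incr; auto; lra.
    - rewrite <- E2'. apply G_decr; auto; lra. }
  assert (Emp : forall tau, ~ (exp x1 <= tau <= exp x2) -> is_empty (slice (Zset d g k) tau)).
  { intros tau Ht. apply slice_empty; auto.
    destruct (Rle_dec tau 0) as [Hn|Hn]; [left; lra|].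
    destruct (Rle_dec tau 1) as [Hn'|Hn']; [|left; lra].
    right; left. destruct (not_in_bounds x1 x2 tau ltac:(lra) ltac:(lra) Ht) as [L|L].
    - rewrite <- E1. apply G_incr; auto; lra.
    - rewrite <- E2'. apply G_decr; auto; lra. }
  assert (Hexp : exp x1 < exp x2) by (apply exp_increasing; lra).
  assert (Hexp2 : exp x2 < 1) by (rewrite <- exp_0; apply exp_increasing; lra).
  pose proof (exp_pos x1) as Hexp1.
  assert (S1 : is_singleton (slice (Zset d g k) (exp x1)) (emb (exp x1) (3 * PI / 2))).
  { apply slice_bot; try lra; rewrite ln_exp; auto. }
  assert (S2 : is_singleton (slice (Zset d g k) (exp x2)) (emb (exp x2) (3 * PI / 2))).
  { apply slice_bot; try lra; rewrite ln_exp; auto. }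
  assert (T : forall tau, exp x1 < tau < exp x2 -> has_exactly_two (slice (Zset d g k) tau)).
  { intros. apply slice_two; try lra; apply Two; auto. }
  exists (exp x1), (exp x2). split; [lra|]. split; [lra|]. split; [exact T|].
  split; [exact S1|]. split; [exact S2|]. split; [exact Emp|].
  split; [|split].
  - apply (super_gen d g k (exp x1) (3 * PI / 2) (exp x2 - exp x1) (emb (exp x1) (3 * PI / 2))); auto.
    + lra.
    + rewrite lev_3pi2, ln_exp. auto.
    + apply c3.
    + lra.
    + intros. apply T. lra.
    + intros. apply Emp. lra.
  - apply (sub_gen d g k (exp x2) (3 * PI / 2) (exp x2 - exp x1) (emb (exp x2) (3 * PI / 2))); auto.
    + lra.
    + rewrite lev_3pi2, ln_exp. auto.
    + apply c3.
    + lra.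
    + intros. apply T. lra.
    + intros. apply Emp. lra.
  - exists (cX d g k). split.
    + apply cX_simple; auto.
    + apply cX_contr; auto.
Qed.

Lemma graph_scp f l a b : continuity f -> incr_on f a b -> a <= b -> continuity l ->
  (forall s, f a <= l s <= f b) -> (forall s s', sin s = sin s' -> l s = l s') ->
  simple_closed_param (cg f l a b) (fun p => exists t, 0 <= t <= 1 /\ p = cg f l a b t).
Proof.
  intros. split; [apply cg_cont; auto|]. split; [apply cg_closed; auto|].
  split; [apply cg_inj|]. intro p. tauto.
Qed.

Lemma graph_nc f l a b : ~ contractible_in_C (cg f l a b).
Proof. apply not_contr. intros. apply cg_angle. Qed.

Lemma lev_sin_eq g k s s' : sin s = sin s' -> lev g k s = lev g k s'.
Proof. unfold lev. intros E; rewrite E; reflexivity. Qed.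

Lemma nlev_cont g k : continuity (fun s => - lev g k s).
Proof. apply (continuity_opp (lev g k)). apply lev_cont. Qed.

Lemma incr_lt_inv f a b x y : incr_on f a b -> a <= x <= b -> a <= y <= b -> f x < f y -> x < y.
Proof.
  intros Hi Hx Hy H. destruct (Rlt_dec x y); auto.
  pose proof (incr_le f a b y x Hi ltac:(lra) ltac:(lra) ltac:(lra)). lra.
Qed.

Lemma partY k g d : 0 < k < 1 -> 0 < g -> 1 < d ->
  forall M, d < Phi -> is_max_F d M -> g < M / (1 + k) ->
     exists a1 a2 a3 a4, 0 < a1 < a2 /\ a2 < a3 < a4 /\ a4 < 1 /\
       (forall tau, (a1 < tau < a2 \/ a3 < tau < a4) ->
          has_exactly_two (slice (Zset d g k) tau)) /\
       is_singleton (slice (Zset d g k) a1) (emb a1 (3 * PI / 2)) /\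
       is_singleton (slice (Zset d g k) a2) (emb a2 (PI / 2)) /\
       is_singleton (slice (Zset d g k) a3) (emb a3 (PI / 2)) /\
       is_singleton (slice (Zset d g k) a4) (emb a4 (3 * PI / 2)) /\
       (forall tau, ~ (a1 <= tau <= a2) -> ~ (a3 <= tau <= a4) ->
          is_empty (slice (Zset d g k) tau)) /\
       supercritical d g k a1 (3 * PI / 2) /\
       subcritical d g k a2 (PI / 2) /\
       supercritical d g k a3 (PI / 2) /\
       subcritical d g k a4 (3 * PI / 2) /\
       exists c1 c2 A1 A2,
         simple_closed_param c1 A1 /\ simple_closed_param c2 A2 /\
         (forall p, ~ (A1 p /\ A2 p)) /\
         (forall p, Zset d g k p <-> (A1 p \/ A2 p)) /\
         ~ contractible_in_C c1 /\ ~ contractible_in_C c2.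
Proof.
  intros hk hg hd M hP HM Hg.
  pose proof (M_eq d M hd hP HM) as EM. subst M.
  set (M := Gf d (xc d)) in *.
  assert (hM : g * (1 + k) < M).
  { apply (Rmult_lt_reg_r (/ (1 + k))); [apply Rinv_0_lt_compat; lra|].
    replace (g * (1 + k) * / (1 + k)) with g by (field; lra). unfold Rdiv in Hg. lra. }
  assert (hgk : 0 < g * (1 - k)) by nra.
  assert (hgk2 : g * (1 - k) < g * (1 + k)) by nra.
  set (aY := Rmin (xc d - 1) (ln (g * (1 - k)) / pdelta d)).
  assert (HaY1 : aY < xc d) by (unfold aY; pose proof (Rmin_l (xc d - 1) (ln (g * (1 - k)) / pdelta d)); lra).
  assert (HaY2 : Gf d aY < g * (1 - k)) by (apply G_small'; auto; apply Rmin_r).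
  pose proof (xc_neg d hd hP) as Hxc.
  assert (IL : incr_on (Gf d) aY (xc d)) by (intros x y ? ? ?; apply G_incr; auto).
  pose proof (incr_R d hd hP) as IR.
  destruct (cross_pt (Gf d) aY (xc d) (g * (1 - k)) (G_cont d) IL ltac:(lra) ltac:(fold M; lra))
    as [x1 [Hx1 E1]].
  destruct (cross_pt (Gf d) aY (xc d) (g * (1 + k)) (G_cont d) IL ltac:(lra) ltac:(fold M; lra))
    as [x2 [Hx2 E2]].
  destruct (cross_pt (fR d) (xc d) 0 (- (g * (1 + k))) (fR_cont d) IR ltac:(lra)
    ltac:(rewrite !fR_G, G_0; fold M; lra)) as [x3 [Hx3 E3]].
  destruct (cross_pt (fR d) (xc d) 0 (- (g * (1 - k))) (fR_cont d) IR ltac:(lra)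
    ltac:(rewrite !fR_G, G_0; fold M; lra)) as [x4 [Hx4 E4]].
  assert (x12 : x1 < x2) by (apply (incr_lt_inv (Gf d) aY (xc d)); auto; lra).
  assert (x34 : x3 < x4) by (apply (incr_lt_inv (fR d) (xc d) 0); auto; lra).
  rewrite fR_G in E3, E4.
  assert (E3' : Gf d x3 = g * (1 + k)) by lra. assert (E4' : Gf d x4 = g * (1 - k)) by lra.
  clear E3 E4.
  assert (Gle : forall x, Gf d x <= M) by (intro; apply G_le_xc; auto).
  pose proof (exp_pos x1) as P1.
  assert (e12 : exp x1 < exp x2) by (apply exp_increasing; lra).
  assert (e23 : exp x2 < exp x3) by (apply exp_increasing; lra).
  assert (e34 : exp x3 < exp x4) by (apply exp_increasing; lra).
  assert (e4 : exp x4 < 1) by (rewrite <- exp_0; apply exp_increasing; lra).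
  assert (T : forall tau, (exp x1 < tau < exp x2 \/ exp x3 < tau < exp x4) ->
      has_exactly_two (slice (Zset d g k) tau)).
  { intros tau Ht. apply slice_two; try lra.
    destruct Ht as [Ht|Ht].
    - pose proof (ln_exp_bounds x1 x2 tau ltac:(lra) Ht).
      rewrite <- E1, <- E2. split; apply G_incr; auto; lra.
    - pose proof (ln_exp_bounds x3 x4 tau ltac:(lra) Ht).
      rewrite <- E3', <- E4'. split; apply G_decr; auto; lra. }
  assert (Emp : forall tau, ~ (exp x1 <= tau <= exp x2) -> ~ (exp x3 <= tau <= exp x4) ->
      is_empty (slice (Zset d g k) tau)).
  { intros tau Ht1 Ht2. apply slice_empty; auto.
    destruct (Rle_dec tau 0) as [Hn|Hn]; [left; lra|].
    destruct (Rle_dec tau 1) as [Hn'|Hn']; [|left; lra].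
    right.
    destruct (not_in_bounds x1 x2 tau ltac:(lra) ltac:(lra) Ht1) as [L|L].
    - left. rewrite <- E1. apply G_incr; auto; lra.
    - destruct (not_in_bounds x3 x4 tau ltac:(lra) ltac:(lra) Ht2) as [L'|L'].
      + right. destruct (Rle_dec (ln tau) (xc d)).
        * rewrite <- E2. apply G_incr; auto; lra.
        * rewrite <- E3'. apply G_decr; auto; lra.
      + left. rewrite <- E4'. apply G_decr; auto; lra. }
  assert (S1 : is_singleton (slice (Zset d g k) (exp x1)) (emb (exp x1) (3 * PI / 2)))
    by (apply slice_bot; try lra; rewrite ln_exp; auto).
  assert (S2 : is_singleton (slice (Zset d g k) (exp x2)) (emb (exp x2) (PI / 2)))
    by (apply slice_top; try lra; rewrite ln_exp; auto).
  assert (S3 : is_singleton (slice (Zset d g k) (exp x3)) (emb (exp x3) (PI / 2)))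
    by (apply slice_top; try lra; rewrite ln_exp; auto).
  assert (S4 : is_singleton (slice (Zset d g k) (exp x4)) (emb (exp x4) (3 * PI / 2)))
    by (apply slice_bot; try lra; rewrite ln_exp; auto).
  exists (exp x1), (exp x2), (exp x3), (exp x4).
  split; [lra|]. split; [lra|]. split; [lra|]. split; [exact T|].
  split; [exact S1|]. split; [exact S2|]. split; [exact S3|]. split; [exact S4|].
  split; [exact Emp|].
  split; [|split; [|split; [|split]]].
  - apply (super_gen d g k (exp x1) (3 * PI / 2) (exp x2 - exp x1) (emb (exp x1) (3 * PI / 2))); auto;
      try lra; [rewrite lev_3pi2, ln_exp; auto|apply c3| |].
    + intros. apply T. lra.
    + intros. apply Emp; lra.
  - apply (sub_gen d g k (exp x2) (PI / 2) (Rmin (exp x2 - exp x1) (exp x3 - exp x2)) (emb (exp x2) (PI / 2)));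
      auto; try lra; [rewrite lev_pi2, ln_exp; auto|apply cos_PI2|apply Rmin_pos; lra| |].
    + intros. pose proof (Rmin_l (exp x2 - exp x1) (exp x3 - exp x2)). apply T. lra.
    + intros. pose proof (Rmin_r (exp x2 - exp x1) (exp x3 - exp x2)). apply Emp; lra.
  - apply (super_gen d g k (exp x3) (PI / 2) (Rmin (exp x3 - exp x2) (exp x4 - exp x3)) (emb (exp x3) (PI / 2)));
      auto; try lra; [rewrite lev_pi2, ln_exp; auto|apply cos_PI2|apply Rmin_pos; lra| |].
    + intros. pose proof (Rmin_r (exp x3 - exp x2) (exp x4 - exp x3)). apply T. lra.
    + intros. pose proof (Rmin_l (exp x3 - exp x2) (exp x4 - exp x3)). apply Emp; lra.
  - apply (sub_gen d g k (exp x4) (3 * PI / 2) (exp x4 - exp x3) (emb (exp x4) (3 * PI / 2))); auto;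
      try lra; [rewrite lev_3pi2, ln_exp; auto|apply c3| |].
    + intros. apply T. lra.
    + intros. apply Emp; lra.
  -
    assert (R1 : forall s, Gf d aY <= lev g k s <= Gf d (xc d)).
    { intro s. pose proof (lev_range g k s hg ltac:(lra)). fold M. lra. }
    assert (R2 : forall s, fR d (xc d) <= - lev g k s <= fR d 0).
    { intro s. pose proof (lev_range g k s hg ltac:(lra)). rewrite !fR_G, G_0. fold M. lra. }
    assert (L1 : forall x s, aY <= x <= xc d -> (Gf d x = lev g k s <-> lev g k s = Gf d x)).
    { intros. split; auto. }
    assert (L2 : forall x s, xc d <= x <= 0 -> (fR d x = - lev g k s <-> lev g k s = Gf d x)).
    { intros. rewrite fR_G. split; intro; lra. }
    set (c1 := cg (Gf d) (lev g k) aY (xc d)).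
    set (c2 := cg (fR d) (fun s => - lev g k s) (xc d) 0).
    exists c1, c2, (fun p => exists t, 0 <= t <= 1 /\ p = c1 t), (fun p => exists t, 0 <= t <= 1 /\ p = c2 t).
    split; [apply graph_scp; auto; [apply G_cont|lra|apply lev_cont|apply lev_sin_eq]|].
    split; [apply graph_scp; auto; [apply fR_cont|lra|apply nlev_cont|]|].
    { intros. f_equal. apply lev_sin_eq; auto. }
    split; [|split; [|split; apply graph_nc]].
    + intros p [[t [Ht Ep]] [u [Hu Eq]]].
      pose proof (cg_tcoord (Gf d) (lev g k) aY (xc d) (G_cont d) ltac:(lra) R1 t) as B1.
      pose proof (cg_tcoord (fR d) (fun s => - lev g k s) (xc d) 0 (fR_cont d) ltac:(lra) R2 u) as B2.
      fold c1 in B1. fold c2 in B2. rewrite <- Ep in B1. rewrite <- Eq in B2.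
      assert (Hp : Zset d g k p) by (rewrite Ep; apply (cg_in_Z d g k); try apply G_cont; auto; lra).
      destruct (Z_G_range d g k p hg hk Hp) as [_ [_ HG]].
      assert (ln (tcoord p) = xc d) by lra. rewrite H in HG. fold M in HG. lra.
    + intro p. split.
      * intros Hp. apply Zset_iff in Hp. destruct Hp as [tau [s [H1 [H2 H3]]]].
        pose proof (ln_le0 tau H1).
        destruct (Rle_dec (ln tau) (xc d)).
        -- left. subst p. apply (cg_onto d g k); auto; [apply G_cont|lra|].
           split; auto. destruct (Rle_dec aY (ln tau)); auto. exfalso.
           pose proof (G_incr d (ln tau) aY hd hP ltac:(lra) ltac:(lra)).
           pose proof (lev_range g k s hg ltac:(lra)). lra.
        -- right. subst p. apply (cg_onto d g k); auto; [apply fR_cont|lra|lra].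
      * intros [[t [Ht Ep]]|[t [Ht Ep]]]; subst p; apply (cg_in_Z d g k); auto;
          try apply G_cont; try apply fR_cont; lra.
Qed.

Lemma partZ k g d : 0 < k < 1 -> 0 < g -> 1 < d -> Phi < d ->
     exists b1 b2, 0 < b1 < b2 /\ b2 < 1 /\
       (forall tau, b1 < tau < b2 -> has_exactly_two (slice (Zset d g k) tau)) /\
       is_singleton (slice (Zset d g k) b1) (emb b1 (PI / 2)) /\
       is_singleton (slice (Zset d g k) b2) (emb b2 (3 * PI / 2)) /\
       (forall tau, ~ (b1 <= tau <= b2) -> is_empty (slice (Zset d g k) tau)) /\
       supercritical d g k b1 (PI / 2) /\
       subcritical d g k b2 (3 * PI / 2) /\
       exists c, simple_closed_param c (Zset d g k) /\ ~ contractible_in_C c.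
Proof.
  intros hk hg hd hP.
  assert (hgk : 0 < g * (1 - k)) by nra.
  assert (hgk2 : g * (1 - k) < g * (1 + k)) by nra.
  destruct (G_big d (g * (1 + k)) hd hP ltac:(nra)) as [Hxa0 Hxa].
  set (xa := ln (g * (1 + k) + 2) / pdelta d) in *.
  assert (Hxa1 : xa < 0).
  { destruct (Req_dec xa 0) as [E|E]; [|lra]. rewrite E, G_0 in Hxa. lra. }
  assert (IZ : incr_on (fR d) xa 0).
  { intros x y ? ? ?. rewrite !fR_G. pose proof (G_decr_all d x y hd hP ltac:(lra)). lra. }
  assert (Gdec : forall x y, x < y -> Gf d y < Gf d x) by (intros; apply G_decr_all; auto).
  destruct (cross_pt (fR d) xa 0 (- (g * (1 + k))) (fR_cont d) IZ ltac:(lra)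
    ltac:(rewrite !fR_G, G_0; lra)) as [x1 [Hx1 E1]].
  destruct (cross_pt (fR d) xa 0 (- (g * (1 - k))) (fR_cont d) IZ ltac:(lra)
    ltac:(rewrite !fR_G, G_0; lra)) as [x2 [Hx2 E2]].
  assert (x12 : x1 < x2) by (apply (incr_lt_inv (fR d) xa 0); auto; lra).
  rewrite fR_G in E1, E2.
  assert (E1' : Gf d x1 = g * (1 + k)) by lra. assert (E2' : Gf d x2 = g * (1 - k)) by lra.
  clear E1 E2.
  pose proof (exp_pos x1) as P1.
  assert (e12 : exp x1 < exp x2) by (apply exp_increasing; lra).
  assert (e2 : exp x2 < 1) by (rewrite <- exp_0; apply exp_increasing; lra).
  assert (T : forall tau, exp x1 < tau < exp x2 -> has_exactly_two (slice (Zset d g k) tau)).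
  { intros tau Ht. apply slice_two; try lra.
    pose proof (ln_exp_bounds x1 x2 tau ltac:(lra) Ht).
    rewrite <- E1', <- E2'. split; apply Gdec; lra. }
  assert (Emp : forall tau, ~ (exp x1 <= tau <= exp x2) -> is_empty (slice (Zset d g k) tau)).
  { intros tau Ht. apply slice_empty; auto.
    destruct (Rle_dec tau 0) as [Hn|Hn]; [left; lra|].
    destruct (Rle_dec tau 1) as [Hn'|Hn']; [|left; lra].
    right.
    destruct (not_in_bounds x1 x2 tau ltac:(lra) ltac:(lra) Ht) as [L|L].
    - right. rewrite <- E1'. apply Gdec; lra.
    - left. rewrite <- E2'. apply Gdec; lra. }
  assert (S1 : is_singleton (slice (Zset d g k) (exp x1)) (emb (exp x1) (PI / 2)))
    by (apply slice_top; try lra; rewrite ln_exp; auto).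
  assert (S2 : is_singleton (slice (Zset d g k) (exp x2)) (emb (exp x2) (3 * PI / 2)))
    by (apply slice_bot; try lra; rewrite ln_exp; auto).
  exists (exp x1), (exp x2).
  split; [lra|]. split; [lra|]. split; [exact T|].
  split; [exact S1|]. split; [exact S2|]. split; [exact Emp|].
  split; [|split].
  - apply (super_gen d g k (exp x1) (PI / 2) (exp x2 - exp x1) (emb (exp x1) (PI / 2))); auto;
      try lra; [rewrite lev_pi2, ln_exp; auto|apply cos_PI2| |].
    + intros. apply T. lra.
    + intros. apply Emp; lra.
  - apply (sub_gen d g k (exp x2) (3 * PI / 2) (exp x2 - exp x1) (emb (exp x2) (3 * PI / 2))); auto;
      try lra; [rewrite lev_3pi2, ln_exp; auto|apply c3| |].
    + intros. apply T. lra.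
    + intros. apply Emp; lra.
  - assert (R2 : forall s, fR d xa <= - lev g k s <= fR d 0).
    { intro s. pose proof (lev_range g k s hg ltac:(lra)). rewrite !fR_G, G_0. lra. }
    assert (L2 : forall x s, xa <= x <= 0 -> (fR d x = - lev g k s <-> lev g k s = Gf d x)).
    { intros. rewrite fR_G. split; intro; lra. }
    exists (cg (fR d) (fun s => - lev g k s) xa 0). split; [|apply graph_nc].
    destruct (graph_scp (fR d) (fun s => - lev g k s) xa 0 (fR_cont d) IZ ltac:(lra) (nlev_cont g k) R2)
      as [A [B [C D]]].
    { intros. f_equal. apply lev_sin_eq; auto. }
    split; [exact A|]. split; [exact B|]. split; [exact C|].
    intro p. split.
    + intros Hp. apply Zset_iff in Hp. destruct Hp as [tau [s [H1 [H2 H3]]]].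
      pose proof (ln_le0 tau H1). subst p. apply (cg_onto d g k); [apply fR_cont|exact IZ|lra|exact L2|exact H1|exact H2|].
      split; auto. destruct (Rle_dec xa (ln tau)); auto. exfalso.
      pose proof (Gdec (ln tau) xa ltac:(lra)).
      pose proof (lev_range g k s hg ltac:(lra)). lra.
    + intros [t [Ht Ep]]. subst p. apply (cg_in_Z d g k); auto; try apply fR_cont; lra.
Qed.


Theorem mainTheorem3 (k gam d : R) (hk : 0 < k < 1) (hgam : 0 < gam) (hd : 1 < d) :
  (* (W) *)
  (forall M, d < Phi -> is_max_F d M -> gam > M / (1 - k) ->
     is_empty (Zset d gam k)) /\
  (* (X) *)
  (forall M, d < Phi -> is_max_F d M -> M / (1 + k) < gam < M / (1 - k) ->
     exists tau1 tau2, 0 < tau1 < tau2 /\ tau2 < 1 /\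
       (forall tau, tau1 < tau < tau2 -> has_exactly_two (slice (Zset d gam k) tau)) /\
       is_singleton (slice (Zset d gam k) tau1) (emb tau1 (3 * PI / 2)) /\
       is_singleton (slice (Zset d gam k) tau2) (emb tau2 (3 * PI / 2)) /\
       (forall tau, ~ (tau1 <= tau <= tau2) -> is_empty (slice (Zset d gam k) tau)) /\
       supercritical d gam k tau1 (3 * PI / 2) /\
       subcritical d gam k tau2 (3 * PI / 2) /\
       exists c, simple_closed_param c (Zset d gam k) /\ contractible_in_C c) /\
  (* (Y) *)
  (forall M, d < Phi -> is_max_F d M -> gam < M / (1 + k) ->
     exists a1 a2 a3 a4, 0 < a1 < a2 /\ a2 < a3 < a4 /\ a4 < 1 /\
       (forall tau, (a1 < tau < a2 \/ a3 < tau < a4) ->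
          has_exactly_two (slice (Zset d gam k) tau)) /\
       is_singleton (slice (Zset d gam k) a1) (emb a1 (3 * PI / 2)) /\
       is_singleton (slice (Zset d gam k) a2) (emb a2 (PI / 2)) /\
       is_singleton (slice (Zset d gam k) a3) (emb a3 (PI / 2)) /\
       is_singleton (slice (Zset d gam k) a4) (emb a4 (3 * PI / 2)) /\
       (forall tau, ~ (a1 <= tau <= a2) -> ~ (a3 <= tau <= a4) ->
          is_empty (slice (Zset d gam k) tau)) /\
       supercritical d gam k a1 (3 * PI / 2) /\
       subcritical d gam k a2 (PI / 2) /\
       supercritical d gam k a3 (PI / 2) /\
       subcritical d gam k a4 (3 * PI / 2) /\
       exists c1 c2 A1 A2,
         simple_closed_param c1 A1 /\ simple_closed_param c2 A2 /\
         (forall p, ~ (A1 p /\ A2 p)) /\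
         (forall p, Zset d gam k p <-> (A1 p \/ A2 p)) /\
         ~ contractible_in_C c1 /\ ~ contractible_in_C c2) /\
  (* (Z) *)
  (Phi < d ->
     exists b1 b2, 0 < b1 < b2 /\ b2 < 1 /\
       (forall tau, b1 < tau < b2 -> has_exactly_two (slice (Zset d gam k) tau)) /\
       is_singleton (slice (Zset d gam k) b1) (emb b1 (PI / 2)) /\
       is_singleton (slice (Zset d gam k) b2) (emb b2 (3 * PI / 2)) /\
       (forall tau, ~ (b1 <= tau <= b2) -> is_empty (slice (Zset d gam k) tau)) /\
       supercritical d gam k b1 (PI / 2) /\
       subcritical d gam k b2 (3 * PI / 2) /\
       exists c, simple_closed_param c (Zset d gam k) /\ ~ contractible_in_C c).
Proof.
  split; [|split; [|split]].
  - apply partW; auto.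
  - apply partX; auto.
  - apply partY; auto.
  - intro hP. apply partZ; auto.
Qed.
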